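(* Let $P$ be an orthogonal polygon with $n$ corners. Then $P$ can be divided into at most $\frac{3}{4}n-2$ rectangular pieces by adding only vertical line segments to the interior of $P$. If $P$ is a polyomino, the rectangular pieces can be chosen to be polyominos as well.
   Context: An orthogonal polygon is a polygonal region, possibly with holes, all of whose edges are axis-parallel. A cell is a unit square $[i,i+1]\times[j,j+1]$ with $i,j\in\mathbb{Z}$. A polyomino is a finite union of cells. *)

(* Defs.v *)
From Stdlib Require Import Reals Lra List ZArith.
Open Scope R_scope.

Definition point := (R * R)%type.

(* ---- Local models of a closed orthogonal region near a point p. ----
   They are predicates on the displacement (u, v) = q - p. *)
Definition model_full (u v : R) : Prop := True.
Definition model_empty (u v : R) : Prop := False.
Definition model_halfx (s : bool) (u v : R) : Prop := if s then 0 <= u else u <= 0.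
Definition model_halfy (s : bool) (u v : R) : Prop := if s then 0 <= v else v <= 0.
Definition model_quadrant (s t : bool) (u v : R) : Prop :=
  (if s then 0 <= u else u <= 0) /\ (if t then 0 <= v else v <= 0).
Definition model_threequad (s t : bool) (u v : R) : Prop :=
  ~ ((if s then 0 < u else u < 0) /\ (if t then 0 < v else v < 0)).

Definition locally_like (P : point -> Prop) (p : point) (M : R -> R -> Prop) : Prop :=
  exists eps, 0 < eps /\
    forall q : point, Rabs (fst q - fst p) < eps -> Rabs (snd q - snd p) < eps ->
      (P q <-> M (fst q - fst p) (snd q - snd p)).

Definition interior_pt (P : point -> Prop) (p : point) : Prop :=
  locally_like P p model_full.

Definition boundary_pt (P : point -> Prop) (p : point) : Prop :=
  P p /\ ~ interior_pt P p.

Definition corner (P : point -> Prop) (p : point) : Prop :=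
  exists s t, locally_like P p (model_quadrant s t) \/
              locally_like P p (model_threequad s t).

(* This is
   exactly a polygonal region with holes whose boundary consists of pairwise
   disjoint simple closed axis-parallel polygonal curves. *)
Definition orthogonal_polygon (P : point -> Prop) : Prop :=
  (exists p, P p) /\
  (exists M, forall q, P q -> Rabs (fst q) <= M /\ Rabs (snd q) <= M) /\
  (forall p : point,
      locally_like P p model_full \/ locally_like P p model_empty \/
      (exists s, locally_like P p (model_halfx s)) \/
      (exists s, locally_like P p (model_halfy s)) \/
      (exists s t, locally_like P p (model_quadrant s t)) \/
      (exists s t, locally_like P p (model_threequad s t))) /\
  (forall p q : point, interior_pt P p -> interior_pt P q ->
     exists f g : R -> R, continuity f /\ continuity g /\
       f 0 = fst p /\ g 0 = snd p /\ f 1 = fst q /\ g 1 = snd q /\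
       forall t, 0 <= t <= 1 -> interior_pt P (f t, g t)).

Definition num_corners (P : point -> Prop) (n : nat) : Prop :=
  exists l : list point, NoDup l /\ (forall p, In p l <-> corner P p) /\ length l = n.

Definition rect := (R * R * R * R)%type.
Definition rect_wf (r : rect) : Prop :=
  let '(a, b, c, d) := r in a < b /\ c < d.
Definition in_rect (r : rect) (q : point) : Prop :=
  let '(a, b, c, d) := r in a <= fst q <= b /\ c <= snd q <= d.
Definition in_rect_open (r : rect) (q : point) : Prop :=
  let '(a, b, c, d) := r in a < fst q < b /\ c < snd q < d.

(* The pieces rs divide P into rectangles (nondegenerate, union P, pairwise
   disjoint interiors), and only vertical segments are added: every horizontal
   side of every piece lies on the boundary of P. *)
Definition vertical_rect_partition (P : point -> Prop) (rs : list rect) : Prop :=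
  (forall r, In r rs -> rect_wf r) /\
  (forall q, P q <-> exists r, In r rs /\ in_rect r q) /\
  (forall i j, (i < length rs)%nat -> (j < length rs)%nat -> i <> j ->
     forall q, ~ (in_rect_open (nth i rs (0,0,0,0)) q /\
                  in_rect_open (nth j rs (0,0,0,0)) q)) /\
  (forall r, In r rs ->
     let '(a, b, c, d) := r in
     forall x, a <= x <= b -> boundary_pt P (x, c) /\ boundary_pt P (x, d)).

Definition cell (i j : Z) (q : point) : Prop :=
  IZR i <= fst q <= IZR i + 1 /\ IZR j <= snd q <= IZR j + 1.
Definition polyomino (S : point -> Prop) : Prop :=
  exists cells : list (Z * Z),
    forall q, S q <-> exists ij, In ij cells /\ cell (fst ij) (snd ij) q.

(* Main.v *)
Require Import Defs.
From Stdlib Require Import Reals Lra Lia List Sorted Arith Bool ZArith ClassicalEpsilon Classical.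
Import ListNotations.

Open Scope nat_scope.

Fixpoint sumn (n : nat) (f : nat -> nat) : nat :=
  match n with 0 => 0 | S n' => sumn n' f + f n' end.

Lemma sumn_ext n f g : (forall i, i < n -> f i = g i) -> sumn n f = sumn n g.
Proof. induction n; simpl; intros; auto. rewrite IHn, H; auto. Qed.
Lemma sumn_le n f g : (forall i, i < n -> f i <= g i) -> sumn n f <= sumn n g.
Proof. induction n; simpl; intros; auto. specialize (IHn (fun i h => H i ltac:(lia))). specialize (H n ltac:(lia)). lia. Qed.
Lemma sumn_add n f g : sumn n (fun i => f i + g i) = sumn n f + sumn n g.
Proof. induction n; simpl; auto. rewrite IHn; lia. Qed.
Lemma sumn_mul n c f : sumn n (fun i => c * f i) = c * sumn n f.
Proof. induction n; simpl; auto. rewrite IHn; lia. Qed.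
Lemma sumn_swap n m f : sumn n (fun i => sumn m (fun j => f i j)) = sumn m (fun j => sumn n (fun i => f i j)).
Proof.
  induction n as [|n IHn]; simpl.
  - induction m; simpl; auto. rewrite <- IHm; auto.
  - rewrite IHn. rewrite <- sumn_add. reflexivity.
Qed.
Lemma sumn_shift n f : sumn (S n) f = f 0 + sumn n (fun i => f (S i)).
Proof. induction n; simpl in *; auto. rewrite IHn; lia. Qed.
Lemma sumn_ge1 n f i : i < n -> f i <= sumn n f.
Proof. induction n; intros; [lia|]. simpl. destruct (Nat.eq_dec i n).
  - subst; lia.
  - assert (i < n) by lia. specialize (IHn H0); lia. Qed.
Lemma sumn_ge2 n f i1 i2 : i1 < n -> i2 < n -> i1 <> i2 -> f i1 + f i2 <= sumn n f.
Proof.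
  induction n; intros; [lia|]. simpl.
  destruct (Nat.eq_dec i1 n); destruct (Nat.eq_dec i2 n); subst; try lia.
  all: try (pose proof (sumn_ge1 n f i2 ltac:(lia)); lia).
  all: try (pose proof (sumn_ge1 n f i1 ltac:(lia)); lia).
  all: specialize (IHn ltac:(lia) ltac:(lia) ltac:(lia)); lia.
Qed.

Definition b2n (b : bool) : nat := if b then 1 else 0.

Lemma len_filter_flat {A B} (p : B -> bool) (g : A -> list B) (h : nat -> A) s n :
  length (filter p (flat_map g (map h (seq s n)))) = sumn n (fun k => length (filter p (g (h (s + k))))).
Proof.
  induction n; [reflexivity|]. rewrite seq_S, map_app, flat_map_app, filter_app, length_app, IHn. cbn [sumn].
  simpl. rewrite app_nil_r. reflexivity.
Qed.
Lemma len_filter_map {B} (p : B -> bool) (h : nat -> B) n :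
  length (filter p (map h (seq 0 n))) = sumn n (fun k => b2n (p (h k))).
Proof.
  induction n; [reflexivity|]. rewrite seq_S, map_app, filter_app, length_app, IHn. cbn [sumn].
  simpl. destruct (p (h n)); simpl; lia.
Qed.

Lemma updown (g : nat -> bool) n :
  sumn n (fun i => b2n (g (S i) && negb (g i))) + b2n (g 0) =
  sumn n (fun i => b2n (g i && negb (g (S i)))) + b2n (g n).
Proof. induction n; simpl; auto. destruct (g n), (g (S n)); simpl in *; lia. Qed.

Lemma down_ext (p : nat -> bool) j : p j = true -> p 0 = false ->
  exists a, a < j /\ p a = false /\ forall k, a < k <= j -> p k = true.
Proof.
  induction j; intros h0 h1; [congruence|].
  assert (Hc: p j = true \/ p j = false) by (destruct (p j); auto). destruct Hc as [E|E].
  - destruct (IHj E h1) as [a [h2 [h3 h4]]]. exists a; split; [lia|split; auto].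
    intros k hk. destruct (Nat.eq_dec k (S j)); subst; auto. apply h4; lia.
  - exists j; split; [lia|split; auto]. intros k hk; replace k with (S j) by lia; auto.
Qed.

Lemma up_ext (p : nat -> bool) N j : p j = true -> (forall k, N < k -> p k = false) ->
  exists b, j <= b /\ (forall k, j <= k <= b -> p k = true) /\ p (S b) = false.
Proof.
  intros h0 h1. remember (S N - j) as d. revert j h0 Heqd.
  induction d; intros j h0 Hd.
  - assert (N < j) by lia. rewrite h1 in h0 by lia. congruence.
  - destruct (p (S j)) eqn:E.
    + destruct (IHd (S j) E ltac:(lia)) as [b [hb1 [hb2 hb3]]]. exists b; split; [lia|split; auto].
      intros k hk. destruct (Nat.eq_dec k j); subst; auto. apply hb2; lia.
    + exists j; split; auto. split; auto. intros k hk; replace k with j by lia; auto.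
Qed.

Lemma min_ex (p : nat -> bool) : (exists n, p n = true) -> exists n, p n = true /\ forall m, m < n -> p m = false.
Proof.
  intros [n hn]. induction n as [n IH] using (well_founded_induction lt_wf).
  destruct (existsb p (seq 0 n)) eqn:E.
  - apply existsb_exists in E. destruct E as [m [hm1 hm2]]. apply in_seq in hm1. apply (IH m); auto; lia.
  - exists n; split; auto. intros m hm. destruct (p m) eqn:E2; auto.
    assert (existsb p (seq 0 n) = true) by (apply existsb_exists; exists m; split; auto; apply in_seq; lia). congruence.
Qed.

Lemma max_ex (p : nat -> bool) N : (exists n, p n = true) -> (forall k, N < k -> p k = false) ->
  exists n, p n = true /\ forall m, n < m -> p m = false.
Proof.
  intros [n hn] hN. assert (n <= N) by (destruct (le_lt_dec n N); auto; rewrite hN in hn; [congruence|lia]).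
  remember (N - n) as d. revert n hn H Heqd. induction d as [d IH] using (well_founded_induction lt_wf).
  intros n hn hle hd.
  destruct (existsb p (seq (S n) (N - n))) eqn:E.
  - apply existsb_exists in E. destruct E as [m [hm1 hm2]]. apply in_seq in hm1.
    apply (IH (N - m)) with m; auto; lia.
  - exists n; split; auto. intros m hm. destruct (p m) eqn:E2; auto.
    destruct (le_lt_dec m N). 
    + assert (existsb p (seq (S n) (N - n)) = true) by (apply existsb_exists; exists m; split; auto; apply in_seq; lia). congruence.
    + rewrite <- E2; apply hN; auto.
Qed.

Definition runF (f : nat -> bool) a b :=
  (a <? b) && forallb f (seq (S a) (b - a)) && negb (f a) && negb (f (S b)).

Lemma runF_spec f a b : runF f a b = true <->
  a < b /\ (forall k, a < k <= b -> f k = true) /\ f a = false /\ f (S b) = false.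
Proof.
  unfold runF. rewrite !andb_true_iff, !negb_true_iff, Nat.ltb_lt, forallb_forall.
  split.
  - intros [[[h1 h2] h3] h4]; repeat split; auto. intros k hk; apply h2, in_seq; lia.
  - intros [h1 [h2 [h3 h4]]]; repeat split; auto. intros k hk; apply in_seq in hk; apply h2; lia.
Qed.

Fixpoint st (f : nat -> bool) j := match j with 0 => 0 | S j' => if f j' then st f j' else j' end.

Lemma st_spec f j : f 0 = false -> f j = true ->
  st f j < j /\ f (st f j) = false /\ forall k, st f j < k <= j -> f k = true.
Proof.
  intros h0; induction j; intros hj; [congruence|]. simpl.
  assert (Hc: f j = true \/ f j = false) by (destruct (f j); auto). destruct Hc as [E|E]; rewrite E.
  - destruct (IHj E) as [a [b c]]. repeat split; try lia; auto. intros k hk.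
    destruct (Nat.eq_dec k (S j)); subst; auto. apply c; lia.
  - repeat split; auto. intros k hk; replace k with (S j) by lia; auto.
Qed.

Lemma run_st f a b : f 0 = false -> runF f a b = true -> a = st f b.
Proof.
  intros h0 hr. apply runF_spec in hr. destruct hr as [h1 [h2 [h3 h4]]].
  destruct (st_spec f b h0 (h2 b ltac:(lia))) as [s1 [s2 s3]].
  destruct (lt_eq_lt_dec a (st f b)) as [[h|h]|h]; auto.
  - rewrite h2 in s2; [congruence|lia].
  - rewrite s3 in h3; [congruence|lia].
Qed.

Lemma sumn_zero n f : (forall i, i < n -> f i = 0) -> sumn n f = 0.
Proof. intros h; rewrite (sumn_ext n f (fun _ => 0)); auto. clear. induction n; simpl; auto. rewrite IHn; auto. Qed.

Lemma sumn_eq1 n s : s < n -> sumn n (fun a => b2n (a =? s)) = 1.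
Proof.
  induction n; intros; [lia|]. simpl. destruct (Nat.eq_dec s n).
  - subst. rewrite Nat.eqb_refl. rewrite sumn_zero; auto.
    intros i hi. destruct (Nat.eqb_spec i n); auto; lia.
  - rewrite IHn by lia. destruct (Nat.eqb_spec n s); [lia|]. simpl; lia.
Qed.

Lemma xor_id x y : b2n (xorb x y) + 2 * b2n (x && y) = b2n x + b2n y.
Proof. destruct x, y; simpl; lia. Qed.

Section Line.
Variables L R : nat -> bool.
Variable Mm : nat.
Hypothesis L0 : L 0 = false.
Hypothesis R0 : R 0 = false.
Hypothesis LM : forall j, Mm < j -> L j = false.
Hypothesis RM : forall j, Mm < j -> R j = false.
Hypothesis ND1 : forall j, ~ (L j = true /\ R (S j) = true /\ R j = false /\ L (S j) = false).
Hypothesis ND2 : forall j, ~ (R j = true /\ L (S j) = true /\ L j = false /\ R (S j) = false).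

Definition eE f b := f b && negb (f (S b)).

Lemma sum_run f b : f 0 = false -> (forall j, Mm < j -> f j = false) ->
  sumn (S Mm) (fun a => b2n (runF f a b)) = b2n (eE f b).
Proof.
  intros h0 hM. unfold eE.
  destruct (f b) eqn:Eb; destruct (f (S b)) eqn:Eb1; cbn [andb negb b2n].
  - apply sumn_zero. intros a ha. destruct (runF f a b) eqn:E; auto. apply runF_spec in E. destruct E as [_ [_ [_ E]]]; congruence.
  - assert (b <= Mm) by (destruct (le_lt_dec b Mm); auto; rewrite hM in Eb; [congruence|lia]).
    destruct (st_spec f b h0 Eb) as [s1 [s2 s3]].
    rewrite <- (sumn_eq1 (S Mm) (st f b)) by lia. apply sumn_ext. intros a ha.
    destruct (runF f a b) eqn:E.
    + rewrite (run_st f a b h0 E), Nat.eqb_refl; auto.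
    + destruct (Nat.eqb_spec a (st f b)); auto. subst a. exfalso.
      assert (runF f (st f b) b = true) by (apply runF_spec; repeat split; auto). congruence.
  - apply sumn_zero. intros a ha. destruct (runF f a b) eqn:E; auto. apply runF_spec in E. destruct E as [h1 [h2 _]].
    rewrite h2 in Eb; [congruence|lia].
  - apply sumn_zero. intros a ha. destruct (runF f a b) eqn:E; auto. apply runF_spec in E. destruct E as [h1 [h2 _]].
    rewrite h2 in Eb; [congruence|lia].
Qed.

Lemma sum_run2 b :
  sumn (S Mm) (fun a => b2n (runF L a b && runF R a b)) = b2n (eE L b && eE R b && (st L b =? st R b)).
Proof.
  unfold eE.
  destruct (L b && negb (L (S b))) eqn:EL; [|cbn [andb negb b2n]; apply sumn_zero; intros a ha;
    destruct (runF L a b) eqn:E; auto; apply runF_spec in E; destruct E as [h1 [h2 [h3 h4]]];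
    rewrite h2 in EL by lia; rewrite h4 in EL; discriminate].
  destruct (R b && negb (R (S b))) eqn:ER; [|cbn [andb negb b2n]; apply sumn_zero; intros a ha;
    destruct (runF R a b) eqn:E; [|rewrite andb_false_r; auto]; apply runF_spec in E; destruct E as [h1 [h2 [h3 h4]]];
    rewrite h2 in ER by lia; rewrite h4 in ER; discriminate].
  apply andb_true_iff in EL; destruct EL as [EL EL1]. apply negb_true_iff in EL1.
  apply andb_true_iff in ER; destruct ER as [ER ER1]. apply negb_true_iff in ER1.
  assert (b <= Mm) by (destruct (le_lt_dec b Mm); auto; rewrite LM in EL; [congruence|lia]).
  destruct (st_spec L b L0 EL) as [s1 [s2 s3]].
  destruct (st_spec R b R0 ER) as [t1 [t2 t3]].
  cbn [andb negb b2n].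
  destruct (Nat.eqb_spec (st L b) (st R b)) as [e|e].
  - cbn [b2n]. rewrite <- (sumn_eq1 (S Mm) (st L b)) by lia. apply sumn_ext. intros a ha.
    destruct (Nat.eqb_spec a (st L b)).
    + subst a.
      assert (H0 : runF L (st L b) b = true) by (apply runF_spec; repeat split; auto).
      assert (H1 : runF R (st L b) b = true) by (rewrite e; apply runF_spec; repeat split; auto).
      rewrite H0, H1; reflexivity.
    + destruct (runF L a b) eqn:E; auto. apply run_st in E; auto. congruence.
  - cbn [b2n]. apply sumn_zero. intros a ha.
    destruct (runF L a b) eqn:E; auto. destruct (runF R a b) eqn:E'; auto.
    apply run_st in E; auto. apply run_st in E'; auto. congruence.
Qed.

Definition Xv b := sumn (S Mm) (fun a => b2n (xorb (runF L a b) (runF R a b))).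

Lemma X_eq b : Xv b + 2 * b2n (eE L b && eE R b && (st L b =? st R b)) = b2n (eE L b) + b2n (eE R b).
Proof.
  unfold Xv. rewrite <- sum_run2, <- (sum_run L b L0 LM), <- (sum_run R b R0 RM).
  rewrite <- sumn_mul, <- !sumn_add. apply sumn_ext. intros; apply xor_id.
Qed.

Definition pot h := if L h && R h then (if st L h =? st R h then 0 else 4) else if L h || R h then 1 else 0.
Definition bud j := let c := b2n (L j) + b2n (R j) + b2n (L (S j)) + b2n (R (S j)) in
  b2n (c =? 1) + 3 * b2n (c =? 3).

Lemma step h : 2 * Xv h + pot (S h) <= pot h + bud h.
Proof.
  pose proof (X_eq h) as HX. unfold pot, bud, eE in *. cbn [st].
  assert (HsL : L h = true -> st L h < h) by (intro E; apply (st_spec L h L0 E)).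
  assert (HsR : R h = true -> st R h < h) by (intro E; apply (st_spec R h R0 E)).
  pose proof (ND1 h) as N1. pose proof (ND2 h) as N2.
  destruct (L h); destruct (R h); destruct (L (S h)); destruct (R (S h));
  try specialize (HsL eq_refl); try specialize (HsR eq_refl); simpl in *;
  try (exfalso; tauto);
  repeat match goal with |- context[?a =? ?b] => destruct (Nat.eqb_spec a b) end;
  repeat match goal with H : context[?a =? ?b] |- _ => destruct (Nat.eqb_spec a b) end;
  simpl in *; lia.
Qed.

Lemma scan h : 2 * sumn h Xv + pot h <= sumn h bud.
Proof.
  induction h.
  - simpl. unfold pot. rewrite L0, R0. simpl; lia.
  - simpl. pose proof (step h). lia.
Qed.

Lemma line_bound :
  2 * sumn (S Mm) (fun a => sumn (S Mm) (fun b => b2n (xorb (runF L a b) (runF R a b))))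
  <= sumn (S Mm) bud.
Proof.
  rewrite sumn_swap. pose proof (scan (S Mm)). unfold pot in H.
  rewrite (LM (S Mm)), (RM (S Mm)) in H by lia. cbn [andb orb] in H. unfold Xv in H. lia.
Qed.

End Line.

Lemma NoDup_flat_map {A B} (g : A -> list B) l :
  NoDup l -> (forall x, In x l -> NoDup (g x)) ->
  (forall x y z, In x l -> In y l -> In z (g x) -> In z (g y) -> x = y) -> NoDup (flat_map g l).
Proof.
  induction l; intros h1 h2 h3; simpl; [constructor|].
  inversion h1; subst. apply NoDup_app.
  - apply h2; simpl; auto.
  - apply IHl; auto. intros x hx; apply h2; simpl; auto. intros x y z hx hy; apply h3; simpl; auto.
  - intros z hz hz'. apply in_flat_map in hz'. destruct hz' as [y [hy hzy]].
    assert (a = y) by (apply (h3 a y z); simpl; auto). subst; tauto.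
Qed.

Lemma len_filter_flat' {B} (p : B -> bool) (g : nat -> list B) s n :
  length (filter p (flat_map g (seq s n))) = sumn n (fun k => length (filter p (g (s + k)))).
Proof. rewrite <- (map_id (seq s n)). rewrite len_filter_flat. reflexivity. Qed.

Section Grid.
Local Set Default Proof Using "All".
Variable F : nat -> nat -> bool.
Variables K Mm : nat.
Hypothesis F0c : forall j, F 0 j = false.
Hypothesis Fc0 : forall c, F c 0 = false.
Hypothesis FK : forall c j, K < c -> F c j = false.
Hypothesis FM : forall c j, Mm < j -> F c j = false.
Hypothesis ND1 : forall i j, ~ (F i j = true /\ F (S i) (S j) = true /\ F (S i) j = false /\ F i (S j) = false).
Hypothesis ND2 : forall i j, ~ (F (S i) j = true /\ F i (S j) = true /\ F i j = false /\ F (S i) (S j) = false).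
Hypothesis Fne : exists c j, F c j = true.

Definition runb c a b := runF (F c) a b.
Definition startb c a b := runb c a b && negb (runb (pred c) a b).
Definition trip := flat_map (fun c => flat_map (fun a => map (fun b => (c, a, b)) (seq 0 (S Mm))) (seq 0 (S Mm))) (seq 1 K).
Definition pieces := filter (fun t => match t with (c, a, b) => startb c a b end) trip.

Fixpoint endc fuel a b c := match fuel with 0 => c | S f => if runb (S c) a b then endc f a b (S c) else c end.

Lemma runb_spec c a b : runb c a b = true -> 1 <= c <= K /\ a < b <= Mm.
Proof.
  intro h. apply runF_spec in h. destruct h as [h1 [h2 [h3 h4]]]. specialize (h2 b ltac:(lia)).
  destruct c; [rewrite F0c in h2; congruence|].
  destruct (le_lt_dec (S c) K); [|rewrite FK in h2; [congruence|lia]].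
  destruct (le_lt_dec b Mm); [|rewrite FM in h2; [congruence|lia]]. lia.
Qed.

Lemma endc_spec a b : forall fuel c, runb c a b = true -> K - c <= fuel ->
  c <= endc fuel a b c /\ (forall k, c <= k <= endc fuel a b c -> runb k a b = true) /\ runb (S (endc fuel a b c)) a b = false.
Proof.
  induction fuel; intros c h1 h2; simpl.
  - destruct (runb_spec c a b h1). split; [lia|]. split.
    + intros k hk; replace k with c by lia; auto.
    + destruct (runb (S c) a b) eqn:E; auto. apply runb_spec in E; lia.
  - destruct (runb (S c) a b) eqn:E.
    + destruct (IHfuel (S c) E) as [e1 [e2 e3]]. { apply runb_spec in E; lia. }
      split; [lia|]. split; auto. intros k hk. destruct (Nat.eq_dec k c); subst; auto. apply e2; lia.
    + split; auto. split; auto. intros k hk; replace k with c by lia; auto.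
Qed.

Definition cE c a b := endc K a b c.

Lemma in_pieces c a b : In (c, a, b) pieces <-> startb c a b = true.
Proof.
  unfold pieces. rewrite filter_In. split; [tauto|]. intro h; split; auto.
  unfold trip. apply in_flat_map. unfold startb in h. apply andb_true_iff in h. destruct h as [h _].
  destruct (runb_spec c a b h). exists c; split; [apply in_seq; lia|].
  apply in_flat_map. exists a; split; [apply in_seq; lia|]. apply in_map_iff. exists b; split; auto. apply in_seq; lia.
Qed.

Lemma NoDup_pieces : NoDup pieces.
Proof.
  apply NoDup_filter. unfold trip. apply NoDup_flat_map; [apply seq_NoDup| |].
  - intros c _. apply NoDup_flat_map; [apply seq_NoDup| |].
    + intros a _. apply NoDup_map_NoDup_ForallPairs; [|apply seq_NoDup]. intros x y _ _ h; congruence.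
    + intros x y z _ _ h1 h2. apply in_map_iff in h1; apply in_map_iff in h2.
      destruct h1 as [? [<- _]]; destruct h2 as [? [h _]]; congruence.
  - intros x y z _ _ h1 h2. apply in_flat_map in h1; apply in_flat_map in h2.
    destruct h1 as [? [_ h1]]; destruct h2 as [? [_ h2]].
    apply in_map_iff in h1; apply in_map_iff in h2.
    destruct h1 as [? [<- _]]; destruct h2 as [? [h _]]; congruence.
Qed.

Lemma start_piece c a b : startb c a b = true ->
  1 <= c <= cE c a b /\ cE c a b <= K /\ a < b <= Mm /\
  (forall k, c <= k <= cE c a b -> runb k a b = true) /\ runb (S (cE c a b)) a b = false /\
  runb (pred c) a b = false.
Proof.
  intro h. unfold startb in h. apply andb_true_iff in h. destruct h as [h1 h2]. apply negb_true_iff in h2.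
  destruct (runb_spec c a b h1).
  destruct (endc_spec a b K c h1 ltac:(lia)) as [e1 [e2 e3]].
  assert (runb (cE c a b) a b = true) by (apply e2; unfold cE; lia).
  destruct (runb_spec _ _ _ H1). unfold cE in *. repeat split; auto; lia.
Qed.

Lemma run_unique c a b a' b' j : runb c a b = true -> runb c a' b' = true ->
  a < j <= b -> a' < j <= b' -> a = a' /\ b = b'.
Proof.
  intros h1 h2 j1 j2.
  assert (b = b').
  { apply runF_spec in h1; apply runF_spec in h2.
    destruct h1 as [_ [p1 [_ p2]]]; destruct h2 as [_ [q1 [_ q2]]].
    destruct (lt_eq_lt_dec b b') as [[h|h]|h]; auto.
    - rewrite q1 in p2; [congruence|lia].
    - rewrite p1 in q2; [congruence|lia]. }
  subst b'. split; auto. rewrite (run_st _ a b (Fc0 c) h1), (run_st _ a' b (Fc0 c) h2). auto.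
Qed.

Lemma piece_unique c a b c' a' b' k j :
  In (c, a, b) pieces -> In (c', a', b') pieces ->
  c <= k <= cE c a b -> c' <= k <= cE c' a' b' -> a < j <= b -> a' < j <= b' ->
  (c, a, b) = (c', a', b').
Proof.
  intros h1 h2 k1 k2 j1 j2. apply in_pieces, start_piece in h1. apply in_pieces, start_piece in h2.
  destruct h1 as [p1 [p2 [p3 [p4 [p5 p6]]]]]. destruct h2 as [q1 [q2 [q3 [q4 [q5 q6]]]]].
  destruct (run_unique k a b a' b' j (p4 k k1) (q4 k k2) j1 j2) as [-> ->].
  destruct (lt_eq_lt_dec c c') as [[h|h]|h]; subst; auto.
  - rewrite p4 in q6; [congruence|lia].
  - rewrite q4 in p6; [congruence|lia].
Qed.

Lemma cover_disc c j : F c j = true -> exists c1 a b, In (c1, a, b) pieces /\ c1 <= c <= cE c1 a b /\ a < j <= b.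
Proof.
  intro h.
  destruct (down_ext (F c) j h (Fc0 c)) as [a [a1 [a2 a3]]].
  destruct (up_ext (F c) Mm j h (FM c)) as [b [b1 [b2 b3]]].
  assert (hr : runb c a b = true).
  { apply runF_spec; repeat split; auto; try lia. intros k hk. destruct (le_lt_dec k j); [apply a3|apply b2]; lia. }
  destruct (down_ext (fun c' => runb c' a b) c hr) as [c0 [c01 [c02 c03]]].
  { destruct (runb 0 a b) eqn:E; auto. apply runb_spec in E; lia. }
  assert (hs : startb (S c0) a b = true).
  { unfold startb. simpl. rewrite c02, c03 by lia. reflexivity. }
  exists (S c0), a, b. split; [apply in_pieces; auto|]. split; [|lia].
  destruct (start_piece _ _ _ hs) as [p1 [p2 [p3 [p4 [p5 p6]]]]]. split; [lia|].
  destruct (le_lt_dec c (cE (S c0) a b)); auto.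
  rewrite c03 in p5; [congruence|lia].
Qed.

Definition cnt i j := b2n (F i j) + b2n (F (S i) j) + b2n (F i (S j)) + b2n (F (S i) (S j)).
Definition convb i j := cnt i j =? 1.
Definition reflb i j := cnt i j =? 3.
Definition CONV := sumn (S K) (fun i => sumn (S Mm) (fun j => b2n (convb i j))).
Definition REFL := sumn (S K) (fun i => sumn (S Mm) (fun j => b2n (reflb i j))).

Lemma len_pieces : length pieces = sumn K (fun k => sumn (S Mm) (fun a => sumn (S Mm) (fun b => b2n (startb (S k) a b)))).
Proof.
  unfold pieces, trip. rewrite len_filter_flat'. apply sumn_ext. intros k hk.
  rewrite len_filter_flat'. apply sumn_ext. intros a ha.
  rewrite len_filter_map. reflexivity.
Qed.

Lemma ab_count a b : 2 * sumn K (fun k => b2n (startb (S k) a b)) =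
  sumn (S K) (fun k => b2n (xorb (runb k a b) (runb (S k) a b))).
Proof.
  set (up := fun k => b2n (runb (S k) a b && negb (runb k a b))).
  set (dn := fun k => b2n (runb k a b && negb (runb (S k) a b))).
  assert (hx : sumn (S K) (fun k => b2n (xorb (runb k a b) (runb (S k) a b))) = sumn (S K) up + sumn (S K) dn).
  { rewrite <- sumn_add. apply sumn_ext. intros k _. unfold up, dn. destruct (runb k a b), (runb (S k) a b); reflexivity. }
  pose proof (updown (fun k => runb k a b) (S K)) as hu.
  assert (g0 : runb 0 a b = false) by (destruct (runb 0 a b) eqn:E; auto; apply runb_spec in E; lia).
  assert (gK : runb (S K) a b = false) by (destruct (runb (S K) a b) eqn:E; auto; apply runb_spec in E; lia).
  cbv beta in hu. rewrite g0, gK in hu. fold up dn in hu. change (b2n false) with 0 in hu.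
  assert (hs : sumn K (fun k => b2n (startb (S k) a b)) = sumn (S K) up).
  { cbn [sumn]. unfold up at 2. rewrite gK. simpl andb. change (b2n false) with 0. rewrite Nat.add_0_r.
    apply sumn_ext. reflexivity. }
  lia.
Qed.

Lemma count4 : 4 * length pieces <= CONV + 3 * REFL.
Proof.
  assert (H2 : 2 * length pieces = sumn (S K) (fun k => sumn (S Mm) (fun a => sumn (S Mm) (fun b =>
            b2n (xorb (runb k a b) (runb (S k) a b)))))).
  { rewrite len_pieces.
    rewrite sumn_swap. rewrite (sumn_swap (S K)).
    rewrite <- sumn_mul. apply sumn_ext. intros a ha.
    rewrite sumn_swap. rewrite (sumn_swap (S K)). rewrite <- sumn_mul. apply sumn_ext. intros b hb.
    apply ab_count. }
  assert (HL : forall k, 2 * sumn (S Mm) (fun a => sumn (S Mm) (fun b => b2n (xorb (runb k a b) (runb (S k) a b))))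
     <= sumn (S Mm) (bud (F k) (F (S k)))).
  { intro k. apply line_bound; intros; auto; try (apply FM; auto); try apply ND1; try apply ND2. }
  assert (HB : forall k, sumn (S Mm) (bud (F k) (F (S k))) = sumn (S Mm) (fun j => b2n (convb k j)) + 3 * sumn (S Mm) (fun j => b2n (reflb k j))).
  { intro k. rewrite <- sumn_mul, <- sumn_add. apply sumn_ext. intros j _. reflexivity. }
  unfold CONV, REFL. rewrite <- sumn_mul, <- sumn_add.
  assert (4 * length pieces = 2 * (2 * length pieces)) by lia. rewrite H, H2.
  rewrite <- sumn_mul. apply sumn_le. intros k _. rewrite <- HB. apply HL.
Qed.

Lemma conv4 : 4 <= CONV.
Proof.
  set (col := fun c => existsb (fun j => F c j) (seq 0 (S Mm))).
  assert (colP : forall c, col c = true <-> exists j, F c j = true).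
  { intro c. unfold col. rewrite existsb_exists. split.
    - intros [j [_ h]]; eauto.
    - intros [j h]. exists j; split; auto. apply in_seq. destruct (le_lt_dec j Mm); [lia|]. rewrite FM in h; [congruence|lia]. }
  destruct Fne as [c0 [j0 h0]].
  destruct (min_ex col) as [cm [hm1 hm2]]. { exists c0; apply colP; eauto. }
  destruct (max_ex col K) as [cM [hM1 hM2]]. { exists c0; apply colP; eauto. }
  { intros k hk. destruct (col k) eqn:E; auto. apply colP in E. destruct E as [j E]. rewrite FK in E; [congruence|lia]. }
  apply colP in hm1. apply colP in hM1.
  assert (cm <> 0) by (intro; subst; destruct hm1 as [j hj]; rewrite F0c in hj; congruence).
  assert (cm <= cM) by (destruct (le_lt_dec cm cM); auto; specialize (hM2 cm l); rewrite (proj2 (colP cm)) in hM2; [congruence|auto]).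
  assert (hm0 : forall j, F (pred cm) j = false).
  { intro j. destruct (F (pred cm) j) eqn:E; auto. assert (col (pred cm) = true) by (apply colP; eauto).
    rewrite hm2 in H1; [congruence|lia]. }
  assert (hM0 : forall j, F (S cM) j = false).
  { intro j. destruct (F (S cM) j) eqn:E; auto. assert (col (S cM) = true) by (apply colP; eauto).
    rewrite hM2 in H1; [congruence|lia]. }
  assert (cM <= K) by (destruct (le_lt_dec cM K); auto; destruct hM1 as [j hj]; rewrite FK in hj; [congruence|lia]).
  assert (two : forall c, (forall j, F (pred c) j = false) \/ (forall j, F (S c) j = false) -> (exists j, F c j = true) -> c <= K ->
     exists j1 j2, j1 <> j2 /\ j1 <= Mm /\ j2 <= Mm /\ F c (S j1) = true /\ F c j1 = false /\ F c j2 = true /\ F c (S j2) = false).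
  { intros c _ hc hcK.
    destruct (min_ex (F c) hc) as [ja [ha1 ha2]].
    destruct (max_ex (F c) Mm hc (FM c)) as [jb [hb1 hb2]].
    assert (ja <> 0) by (intro; subst; rewrite Fc0 in ha1; congruence).
    assert (ja <= jb) by (destruct (le_lt_dec ja jb); auto; rewrite hb2 in ha1; [congruence|lia]).
    assert (jb <= Mm) by (destruct (le_lt_dec jb Mm); auto; rewrite FM in hb1; [congruence|lia]).
    exists (pred ja), jb. repeat split; try lia.
    - replace (S (pred ja)) with ja by lia; auto.
    - apply ha2; lia.
    - auto.
    - apply hb2; lia. }
  destruct (two cm (or_introl hm0) hm1 ltac:(lia)) as [a1 [a2 [ha [ha1 [ha2 [ha3 [ha4 [ha5 ha6]]]]]]]].
  destruct (two cM (or_intror hM0) hM1 ltac:(lia)) as [b1 [b2 [hb [hb1 [hb2 [hb3 [hb4 [hb5 hb6]]]]]]]].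
  unfold CONV.
  assert (L1 : 2 <= sumn (S Mm) (fun j => b2n (convb (pred cm) j))).
  { eapply Nat.le_trans; [|apply (sumn_ge2 _ _ a1 a2); lia].
    unfold convb, cnt. replace (S (pred cm)) with cm by lia. rewrite !hm0, ha3, ha4, ha5, ha6. simpl. lia. }
  assert (L2 : 2 <= sumn (S Mm) (fun j => b2n (convb cM j))).
  { eapply Nat.le_trans; [|apply (sumn_ge2 _ _ b1 b2); lia].
    unfold convb, cnt. rewrite !hM0, hb3, hb4, hb5, hb6. simpl. lia. }
  eapply Nat.le_trans; [|apply (sumn_ge2 _ _ (pred cm) cM); lia]. lia.
Qed.

Theorem disc_count : 4 * length pieces + 8 <= 3 * (CONV + REFL).
Proof. pose proof count4; pose proof conv4; lia. Qed.

End Grid.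


Open Scope R_scope.

Open Scope R_scope.

Lemma Rabs_lt_iff x e : Rabs x < e <-> -e < x < e.
Proof. split; intro H. destruct (Rabs_def2 _ _ H); lra. apply Rabs_def1; lra. Qed.
Lemma Rabs_le_iff x e : Rabs x <= e <-> -e <= x <= e.
Proof. unfold Rabs; destruct (Rcase_abs x); split; intros; lra. Qed.

Ltac rabs := repeat match goal with
  | H : Rabs _ < _ |- _ => apply Rabs_lt_iff in H
  | H : Rabs _ <= _ |- _ => apply Rabs_le_iff in H
  | |- Rabs _ < _ => apply Rabs_lt_iff
  | |- Rabs _ <= _ => apply Rabs_le_iff
  end.

Inductive Mod := Mfull | Mempty | Mhx (s : bool) | Mhy (s : bool)
  | Mqd (s t : bool) | Mtq (s t : bool).

Definition mdl (m : Mod) : R -> R -> Prop :=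
  match m with
  | Mfull => model_full | Mempty => model_empty
  | Mhx s => model_halfx s | Mhy s => model_halfy s
  | Mqd s t => model_quadrant s t | Mtq s t => model_threequad s t end.

Definition LL (P : point -> Prop) (p : point) (M : R -> R -> Prop) eps :=
  0 < eps /\ forall q : point, Rabs (fst q - fst p) < eps -> Rabs (snd q - snd p) < eps ->
      (P q <-> M (fst q - fst p) (snd q - snd p)).

Lemma ll_LL P p M : locally_like P p M <-> exists eps, LL P p M eps.
Proof. reflexivity. Qed.

Section Geo.
Variable P : point -> Prop.

Lemma ll_ext p M M' : locally_like P p M -> (forall u v, M u v <-> M' u v) -> locally_like P p M'.
Proof. intros [e [He H]] HM; exists e; split; auto. intros q h1 h2; rewrite H; auto. Qed.

Lemma ll_pt p M : locally_like P p M -> (P p <-> M 0 0).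
Proof. intros [e [He H]]. rewrite H; rewrite ?Rminus_diag; try reflexivity;
  rewrite Rabs_R0; lra. Qed.

Lemma LL_two p M1 M2 e1 e2 : LL P p M1 e1 -> LL P p M2 e2 ->
  forall u v, Rabs u < Rmin e1 e2 -> Rabs v < Rmin e1 e2 -> (M1 u v <-> M2 u v).
Proof.
  intros [h1 H1] [h2 H2] u v hu hv.
  pose proof (Rmin_l e1 e2); pose proof (Rmin_r e1 e2).
  specialize (H1 (fst p + u, snd p + v)); specialize (H2 (fst p + u, snd p + v)); simpl in *.
  replace (fst p + u - fst p) with u in * by ring.
  replace (snd p + v - snd p) with v in * by ring.
  rewrite <- H1, <- H2; try reflexivity; rabs; lra.
Qed.

Lemma LL_inherit p M eps : LL P p M eps -> forall q,
  Rabs (fst q - fst p) < eps/2 -> Rabs (snd q - snd p) < eps/2 ->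
  LL P q (fun u v => M (u + (fst q - fst p)) (v + (snd q - snd p))) (eps/2).
Proof.
  intros [he H] q h1 h2; split; [lra|]. intros r r1 r2.
  rewrite H. replace (fst r - fst q + (fst q - fst p)) with (fst r - fst p) by ring.
  replace (snd r - snd q + (snd q - snd p)) with (snd r - snd p) by ring. reflexivity.
  rabs; lra. rabs; lra.
Qed.

End Geo.

Open Scope R_scope.

Lemma rigid_hx s m e dy : 0 < e ->
  (forall a b, Rabs a < e -> Rabs b < e -> (mdl (Mhx s) a b <-> mdl m (a + 0) (b + dy))) ->
  m = Mhx s \/ (exists s' t', m = Mqd s' t' \/ m = Mtq s' t').
Proof.
  intros he H.
  assert (H1 := H (e/2) 0); assert (H2 := H (-(e/2)) 0).
  rewrite Rabs_R0 in *.
  assert (Rabs (e/2) < e) by (rabs; lra).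
  assert (Rabs (-(e/2)) < e) by (rabs; lra).
  specialize (H1 ltac:(assumption) he); specialize (H2 ltac:(assumption) he).
  rewrite !Rplus_0_r, Rplus_0_l in *.
  destruct m; simpl in *; unfold model_full, model_empty, model_halfx, model_halfy in *;
  try (right; eauto; fail);
  try destruct s; try destruct s0; simpl in *;
  try (left; reflexivity); exfalso; try tauto; try (destruct H1, H2; lra).
Qed.

Lemma rigid_hy s m e dx : 0 < e ->
  (forall a b, Rabs a < e -> Rabs b < e -> (mdl (Mhy s) a b <-> mdl m (a + dx) (b + 0))) ->
  m = Mhy s \/ (exists s' t', m = Mqd s' t' \/ m = Mtq s' t').
Proof.
  intros he H.
  assert (H1 := H 0 (e/2)); assert (H2 := H 0 (-(e/2))).
  rewrite Rabs_R0 in *.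
  assert (Rabs (e/2) < e) by (rabs; lra).
  assert (Rabs (-(e/2)) < e) by (rabs; lra).
  specialize (H1 he ltac:(assumption)); specialize (H2 he ltac:(assumption)).
  rewrite !Rplus_0_r, Rplus_0_l in *.
  destruct m; simpl in *; unfold model_full, model_empty, model_halfx, model_halfy in *;
  try (right; eauto; fail);
  try destruct s; try destruct s0; simpl in *;
  try (left; reflexivity); exfalso; try tauto; try (destruct H1, H2; lra).
Qed.

Lemma notfull m : m <> Mfull -> forall e, 0 < e -> exists a b, Rabs a < e /\ Rabs b < e /\ ~ mdl m a b.
Proof.
  intros hm e he.
  assert (Rabs (e/2) < e) by (rabs; lra).
  assert (Rabs (-(e/2)) < e) by (rabs; lra).
  destruct m; simpl; unfold model_full, model_empty, model_halfx, model_halfy, model_quadrant, model_threequad.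
  - congruence.
  - exists 0, 0; rewrite Rabs_R0; tauto.
  - destruct s; [exists (-(e/2)), 0 | exists (e/2), 0]; rewrite Rabs_R0; repeat split; auto; lra.
  - destruct s; [exists 0, (-(e/2)) | exists 0, (e/2)]; rewrite Rabs_R0; repeat split; auto; lra.
  - destruct s; [exists (-(e/2)), 0 | exists (e/2), 0]; rewrite Rabs_R0; repeat split; auto; lra.
  - destruct s, t; [exists (e/2), (e/2) | exists (e/2), (-(e/2)) | exists (-(e/2)), (e/2) | exists (-(e/2)), (-(e/2))];
    repeat split; auto; intro C; apply C; lra.
Qed.

Lemma mdl00 m : m <> Mempty -> mdl m 0 0.
Proof. destruct m; simpl; unfold model_full, model_empty, model_halfx, model_halfy, model_quadrant, model_threequad;
  intros; try destruct s; try destruct t; try congruence; try lra; auto. Qed.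

Open Scope R_scope.

Lemma lub_approx E T : is_lub E T -> forall e, 0 < e -> exists t, E t /\ T - e < t /\ t <= T.
Proof.
  intros [H1 H2] e he. apply NNPP; intro C.
  assert (T <= T - e); [|lra]. apply H2. intros t Et.
  destruct (Rle_dec t (T - e)); auto. exfalso; apply C; exists t; split; auto; split; [lra|]. apply H1; auto.
Qed.

Lemma Rabs_mul_le a x : Rabs a <= 1 -> Rabs (a * x) <= Rabs x.
Proof. intro h; rewrite Rabs_mult. pose proof (Rabs_pos x). nra. Qed.

Section Geo.
Variable P : point -> Prop.
Variable Mb : R.
Hypothesis Hbd : forall q, P q -> Rabs (fst q) <= Mb /\ Rabs (snd q) <= Mb.
Hypothesis Hmod : forall p, exists m, locally_like P p (mdl m).

Lemma follow x0 y0 a b s m0 :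
  (a = 0 /\ (b = 1 \/ b = -1) /\ m0 = Mhx s) \/ (b = 0 /\ (a = 1 \/ a = -1) /\ m0 = Mhy s) ->
  locally_like P (x0, y0) (mdl m0) ->
  exists t, 0 <= t /\ corner P (x0 + a * t, y0 + b * t).
Proof.
  intros Hdir H0.
  set (pt := fun t => (x0 + a * t, y0 + b * t)).
  assert (Ha : Rabs a <= 1) by (destruct Hdir as [[-> [[-> | ->] _]] | [-> [[-> | ->] _]]]; rabs; lra).
  assert (Hb : Rabs b <= 1) by (destruct Hdir as [[-> [[-> | ->] _]] | [-> [[-> | ->] _]]]; rabs; lra).
  assert (Hm00 : mdl m0 0 0) by (apply mdl00; destruct Hdir as [[_ [_ ->]]|[_ [_ ->]]]; discriminate).
  set (E := fun t => 0 <= t /\ forall u, 0 <= u <= t -> locally_like P (pt u) (mdl m0)).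
  assert (E0 : E 0).
  { split; [lra|]. intros u hu. assert (u = 0) by lra. subst u. unfold pt.
    replace (x0 + a * 0) with x0 by ring. replace (y0 + b * 0) with y0 by ring. auto. }
  assert (Ebd : forall t, E t -> t <= 2 * Mb).
  { intros t [ht Ht]. assert (h1 := Ht t ltac:(lra)). assert (h2 := Ht 0 ltac:(lra)).
    apply ll_pt in h1; apply ll_pt in h2. apply proj2 in h1; apply proj2 in h2; specialize (h1 Hm00); specialize (h2 Hm00); apply Hbd in h1; apply Hbd in h2.
    unfold pt in *; simpl in *.
    destruct Hdir as [[-> [[-> | ->] _]] | [-> [[-> | ->] _]]]; destruct h1, h2; rabs; lra. }
  destruct (completeness E) as [T HT].
  { exists (2 * Mb); intros t Et; apply Ebd; auto. }
  { exists 0; auto. }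
  assert (T0 : 0 <= T) by (apply (proj1 HT); auto).
  destruct (Hmod (pt T)) as [m [eps HL]].
  assert (heps : 0 < eps) by apply HL.
  destruct (lub_approx E T HT (eps/2)) as [t' [Et' [ht1 ht2]]]; [lra|].
  destruct Et' as [t'0 Ht'].
  destruct (Ht' t' ltac:(lra)) as [e0 HL0].
  assert (Hin := LL_inherit P (pt T) (mdl m) eps HL (pt t')).
  assert (d1 : fst (pt t') - fst (pt T) = a * (t' - T)) by (unfold pt; simpl; ring).
  assert (d2 : snd (pt t') - snd (pt T) = b * (t' - T)) by (unfold pt; simpl; ring).
  rewrite d1, d2 in Hin.
  assert (Rabs (t' - T) < eps/2) by (rabs; lra).
  specialize (Hin ltac:(eapply Rle_lt_trans; [apply Rabs_mul_le; auto| auto])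
                  ltac:(eapply Rle_lt_trans; [apply Rabs_mul_le; auto| auto])).
  assert (Hag := LL_two P (pt t') _ _ _ _ HL0 Hin).
  assert (Hr : 0 < Rmin e0 (eps/2)) by (apply Rmin_glb_lt; [apply HL0| lra]).
  assert (Hcls : m = m0 \/ (exists s' t', m = Mqd s' t' \/ m = Mtq s' t')).
  { destruct Hdir as [[-> [_ ->]] | [-> [_ ->]]].
    - rewrite Rmult_0_l in Hag. eapply rigid_hx; [exact Hr|]. intros; rewrite Hag; auto; reflexivity.
    - rewrite Rmult_0_l in Hag. eapply rigid_hy; [exact Hr|]. intros; rewrite Hag; auto; reflexivity. }
  destruct Hcls as [-> | [s' [t'' [-> | ->]]]].
  2: { exists T; split; auto. exists s', t''; left; exists eps; exact HL. }
  2: { exists T; split; auto. exists s', t''; right; exists eps; exact HL. }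
  exfalso.
  assert (ET : E (T + eps/4)).
  { split; [lra|]. intros u hu. destruct (Rle_dec u t') as [hu'|hu'].
    - apply Ht'; lra.
    - assert (Hu := LL_inherit P (pt T) (mdl m0) eps HL (pt u)).
      assert (e1 : fst (pt u) - fst (pt T) = a * (u - T)) by (unfold pt; simpl; ring).
      assert (e2 : snd (pt u) - snd (pt T) = b * (u - T)) by (unfold pt; simpl; ring).
      rewrite e1, e2 in Hu.
      assert (Rabs (u - T) < eps/2) by (rabs; lra).
      specialize (Hu ltac:(eapply Rle_lt_trans; [apply Rabs_mul_le; auto| auto])
                  ltac:(eapply Rle_lt_trans; [apply Rabs_mul_le; auto| auto])).
      eapply ll_ext; [exists (eps/2); exact Hu|].
      intros x y. destruct Hdir as [[-> [_ ->]] | [-> [_ ->]]]; simpl;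
      rewrite Rmult_0_l, Rplus_0_r; reflexivity. }
  assert (T + eps/4 <= T) by (apply (proj1 HT); auto). lra.
Qed.

Lemma segment x0 y0 a b L : Rabs a <= 1 -> Rabs b <= 1 -> 0 <= L ->
  ~ (P (x0, y0) <-> P (x0 + a * L, y0 + b * L)) ->
  exists t, 0 <= t <= L /\ boundary_pt P (x0 + a * t, y0 + b * t).
Proof.
  intros Ha Hb HL0 Hne.
  set (pt := fun t => (x0 + a * t, y0 + b * t)).
  assert (Hp0 : pt 0 = (x0, y0)) by (unfold pt; f_equal; ring).
  assert (HQ : exists Q : point -> Prop, ((forall q, Q q <-> P q) \/ (forall q, Q q <-> ~ P q))
             /\ Q (pt 0) /\ ~ Q (pt L)).
  { rewrite Hp0. destruct (classic (P (x0, y0))) as [h|h].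
    - exists P; split; [left; tauto|]. split; auto. intro h'; apply Hne; split; intro; auto.
    - exists (fun q => ~ P q); split; [right; tauto|]. split; auto. intro h'; apply Hne; split; intro; auto.
      exfalso; auto. apply NNPP; auto. }
  destruct HQ as [Q [HQ [Q0 QL]]].
  set (E := fun t => 0 <= t <= L /\ forall u, 0 <= u <= t -> Q (pt u)).
  assert (E0 : E 0) by (split; [lra|]; intros u hu; replace u with 0 by lra; auto).
  destruct (completeness E) as [T HT].
  { exists L; intros t Et; apply Et. }
  { exists 0; auto. }
  assert (T0 : 0 <= T) by (apply (proj1 HT); auto).
  assert (TL : T <= L) by (apply (proj2 HT); intros t Et; apply Et).
  assert (Hbelow : forall u, 0 <= u < T -> Q (pt u)).
  { intros u hu. destruct (lub_approx E T HT (T - u)) as [t'' [[_ Et''] [h1 h2]]]; [lra|].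
    apply Et''; lra. }
  destruct (Hmod (pt T)) as [m [eps HLm]].
  assert (heps : 0 < eps) by apply HLm.
  assert (Hclose : forall u, Rabs (u - T) < eps -> Rabs (fst (pt u) - fst (pt T)) < eps /\ Rabs (snd (pt u) - snd (pt T)) < eps).
  { intros u hu. unfold pt; simpl.
    replace (x0 + a * u - (x0 + a * T)) with (a * (u - T)) by ring.
    replace (y0 + b * u - (y0 + b * T)) with (b * (u - T)) by ring.
    split; eapply Rle_lt_trans; try apply Rabs_mul_le; auto. }
  destruct (classic (m = Mfull \/ m = Mempty)) as [Hfe | Hfe].
  - exfalso.
    assert (Hconst : forall u, Rabs (u - T) < eps -> (Q (pt u) <-> Q (pt T))).
    { intros u hu. destruct (Hclose u hu) as [c1 c2].
      assert (HPu : P (pt u) <-> P (pt T)).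
      { destruct HLm as [_ HLm]. rewrite (HLm (pt u) c1 c2).
        rewrite (HLm (pt T)); rewrite ?Rminus_diag, ?Rabs_R0; auto.
        destruct Hfe as [-> | ->]; simpl; unfold model_full, model_empty; tauto. }
      destruct HQ as [HQ|HQ]; rewrite !HQ; tauto. }
    destruct (classic (Q (pt T))) as [hq|hq].
    + assert (TL' : T < L) by (destruct (Rle_lt_dec L T); auto; replace L with T in QL by lra; tauto).
      set (T' := Rmin L (T + eps/2)).
      assert (T < T') by (apply Rmin_glb_lt; lra).
      assert (T' <= L) by apply Rmin_l.
      assert (T' <= T + eps/2) by apply Rmin_r.
      assert (E T').
      { split; [lra|]. intros u hu. destruct (Rlt_le_dec u T).
        - apply Hbelow; lra.
        - apply (Hconst u); [rabs; lra| auto]. }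
      assert (T' <= T) by (apply (proj1 HT); auto). lra.
    + destruct (lub_approx E T HT (eps/2)) as [t' [[ht0 Et'] [h1 h2]]]; [lra|].
      apply hq. assert (hh : Rabs (t' - T) < eps) by (rabs; lra). apply (proj1 (Hconst t' hh)). apply Et'; lra.
  - exists T; split; [lra|]. fold (pt T). split.
    + destruct HLm as [_ HLm]. rewrite (HLm (pt T)); rewrite ?Rminus_diag, ?Rabs_R0; auto.
      apply mdl00; tauto.
    + intros [e' He']. destruct (notfull m ltac:(tauto) (Rmin eps e')) as [u [v [hu [hv hn]]]].
      { apply Rmin_glb_lt; [lra| apply He']. }
      apply hn. rewrite (LL_two P (pt T) _ _ _ _ HLm He'); auto. exact I.
Qed.

End Geo.

Open Scope R_scope.
Lemma Rabs_lt_iff' x e : -e < x < e -> Rabs x < e.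
Proof. intros; apply Rabs_def1; lra. Qed.

Fixpoint ins (x : R) (l : list R) : list R :=
  match l with
  | [] => [x]
  | y :: l' => if Rlt_dec x y then x :: l else if Req_EM_T x y then l else y :: ins x l'
  end.
Fixpoint srt (l : list R) : list R := match l with [] => [] | x :: l' => ins x (srt l') end.

Lemma ins_In x l z : In z (ins x l) <-> z = x \/ In z l.
Proof.
  induction l; simpl; [intuition congruence|].
  destruct (Rlt_dec x a); simpl; [intuition congruence|]. destruct (Req_EM_T x a); subst; simpl; [intuition congruence|].
  rewrite IHl; intuition congruence.
Qed.

Lemma ins_sorted x l : StronglySorted Rlt l -> StronglySorted Rlt (ins x l).
Proof.
  induction l; intros h; simpl.
  - constructor; constructor.
  - inversion h; subst. destruct (Rlt_dec x a).
    + constructor; auto. constructor; auto. eapply Forall_impl; [|eauto]. intros; simpl in *; lra.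
    + destruct (Req_EM_T x a); auto. constructor; auto. apply Forall_forall. intros z hz.
      apply ins_In in hz. destruct hz; subst; [lra|]. rewrite Forall_forall in H2; auto.
Qed.

Lemma srt_In l z : In z (srt l) <-> In z l.
Proof. induction l; simpl; [tauto|]. rewrite ins_In, IHl; intuition congruence. Qed.
Lemma srt_sorted l : StronglySorted Rlt (srt l).
Proof. induction l; simpl; [constructor|]. apply ins_sorted; auto. Qed.

Lemma sorted_nth l : StronglySorted Rlt l -> forall i j, (i < j < length l)%nat -> nth i l 0 < nth j l 0.
Proof.
  induction l; intros h i j hij; simpl in *; [lia|]. inversion h; subst.
  destruct i, j; try lia.
  - rewrite Forall_forall in H2. apply H2. apply nth_In. lia.
  - apply IHl; auto; lia.
Qed.

Definition sg (b : bool) (d : R) := if b then d else - d.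

Section Grid1.
Variable Xs : list R.
Hypothesis Hs : StronglySorted Rlt Xs.
Hypothesis Hne : (1 <= length Xs)%nat.
Definition KK := pred (length Xs).
Definition XX i := nth i Xs 0.

Lemma Xlt i j : (i < j <= KK)%nat -> XX i < XX j.
Proof. intros; apply sorted_nth; auto. unfold KK in *; lia. Qed.
Lemma Xle i j : (i <= j <= KK)%nat -> XX i <= XX j.
Proof. intros h. destruct (Nat.eq_dec i j); subst; [lra|]. left; apply Xlt; lia. Qed.
Lemma Xin z : In z Xs <-> exists i, (i <= KK)%nat /\ XX i = z.
Proof.
  split.
  - intro h. destruct (In_nth Xs z 0 h) as [i [h1 h2]]. exists i; split; auto. unfold KK; lia.
  - intros [i [h1 h2]]. subst. apply nth_In. unfold KK in *; lia.
Qed.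
Lemma Xbetween z c : In z Xs -> (1 <= c <= KK)%nat -> ~ (XX (c - 1) < z < XX c).
Proof.
  intros h hc [h1 h2]. apply Xin in h. destruct h as [i [hi <-]].
  destruct (lt_eq_lt_dec i c) as [[h|h]|h].
  - assert (XX i <= XX (c-1)) by (apply Xle; lia). lra.
  - subst; lra.
  - assert (XX c < XX i) by (apply Xlt; lia). lra.
Qed.
Lemma Xbounds z : In z Xs -> XX 0 <= z <= XX KK.
Proof. intro h. apply Xin in h. destruct h as [i [hi <-]]. split; apply Xle; lia. Qed.

Lemma loc_co c1 c2 x : (1 <= c1 <= c2)%nat -> (c2 <= KK)%nat -> XX (c1 - 1) <= x < XX c2 ->
  exists c, (c1 <= c <= c2)%nat /\ XX (c - 1) <= x < XX c.
Proof.
  induction c2; intros h1 h2 h3; [lia|].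
  destruct (Nat.eq_dec c1 (S c2)). { subst. exists (S c2); split; [lia|]; auto. }
  destruct (Rlt_le_dec x (XX c2)).
  - destruct (IHc2 ltac:(lia) ltac:(lia)) as [c [hc1 hc2]]; [lra|]. exists c; split; auto; lia.
  - exists (S c2); split; [lia|]. replace (S c2 - 1)%nat with c2 by lia. lra.
Qed.
Lemma loc_oc c1 c2 x : (1 <= c1 <= c2)%nat -> (c2 <= KK)%nat -> XX (c1 - 1) < x <= XX c2 ->
  exists c, (c1 <= c <= c2)%nat /\ XX (c - 1) < x <= XX c.
Proof.
  induction c2; intros h1 h2 h3; [lia|].
  destruct (Nat.eq_dec c1 (S c2)). { subst. exists (S c2); split; [lia|]; auto. }
  destruct (Rle_lt_dec x (XX c2)).
  - destruct (IHc2 ltac:(lia) ltac:(lia)) as [c [hc1 hc2]]; [lra|]. exists c; split; auto; lia.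
  - exists (S c2); split; [lia|]. replace (S c2 - 1)%nat with c2 by lia. lra.
Qed.
Lemma loc_cc c1 c2 x : (1 <= c1 <= c2)%nat -> (c2 <= KK)%nat -> XX (c1 - 1) <= x <= XX c2 ->
  exists c, (c1 <= c <= c2)%nat /\ XX (c - 1) <= x <= XX c.
Proof.
  intros h1 h2 h3. destruct (Rlt_le_dec x (XX c2)).
  - destruct (loc_co c1 c2 x h1 h2 ltac:(lra)) as [c [hc1 hc2]]. exists c; split; auto; lra.
  - exists c2; split; [lia|]. split; [|lra]. apply Rle_trans with (XX c2); [apply Xle; lia|lra].
Qed.
Lemma loc_unique c c' x : (1 <= c <= KK)%nat -> (1 <= c' <= KK)%nat ->
  XX (c - 1) <= x < XX c -> XX (c' - 1) <= x < XX c' -> c = c'.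
Proof.
  intros h1 h2 h3 h4. destruct (lt_eq_lt_dec c c') as [[h|h]|h]; auto.
  - assert (XX c <= XX (c' - 1)) by (apply Xle; lia). lra.
  - assert (XX c' <= XX (c - 1)) by (apply Xle; lia). lra.
Qed.

(* extended open / closed cells: 0 = left of everything, KK+1 = right of everything *)
Definition ox (c : nat) (x : R) : Prop :=
  (c = 0%nat /\ x < XX 0) \/ ((1 <= c <= KK)%nat /\ XX (c - 1) < x < XX c) \/ (c = S KK /\ XX KK < x).
Definition cx (c : nat) (x : R) : Prop :=
  (c = 0%nat /\ x <= XX 0) \/ ((1 <= c <= KK)%nat /\ XX (c - 1) <= x <= XX c) \/ (c = S KK /\ XX KK <= x).

Lemma cx_approx c x : cx c x -> forall e, 0 < e -> exists x', ox c x' /\ Rabs (x' - x) < e.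
Proof.
  intros h e he. destruct h as [[-> h]|[[h1 h] | [-> h]]].
  - exists (x - e/2). split; [left; split; auto; lra|]. apply Rabs_lt_iff'; lra.
  - assert (XX (c-1) < XX c) by (apply Xlt; lia).
    set (d := Rmin e (XX c - XX (c-1)) / 3).
    assert (0 < d) by (unfold d; apply Rmult_lt_0_compat; [apply Rmin_glb_lt; lra| lra]).
    assert (d <= e/3) by (unfold d; pose proof (Rmin_l e (XX c - XX (c-1))); lra).
    assert (d <= (XX c - XX (c-1))/3) by (unfold d; pose proof (Rmin_r e (XX c - XX (c-1))); lra).
    destruct (Rle_lt_dec x ((XX (c-1) + XX c)/2)).
    + exists (x + d). split; [right; left; split; auto; lra|]. apply Rabs_lt_iff'; lra.
    + exists (x - d). split; [right; left; split; auto; lra|]. apply Rabs_lt_iff'; lra.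
  - exists (x + e/2). split; [right; right; split; auto; lra|]. apply Rabs_lt_iff'; lra.
Qed.

Lemma side_pick (sig : bool) x : XX 0 <= x <= XX KK -> (sig = true -> x < XX KK) -> (sig = false -> XX 0 < x) ->
  exists c g, (1 <= c <= KK)%nat /\ 0 < g /\ XX (c - 1) <= x <= XX c /\
    forall d, 0 < d < g -> XX (c - 1) < x + sg sig d < XX c.
Proof.
  intros h h1 h2. destruct sig.
  - specialize (h1 eq_refl). assert (KK <> 0%nat) by (intro e; rewrite e in h1; lra).
    destruct (loc_co 1 KK x ltac:(lia) ltac:(lia) ltac:(simpl; lra)) as [c [hc1 hc2]].
    exists c, (XX c - x). repeat split; try lia; try lra. all: simpl; lra.
  - specialize (h2 eq_refl). assert (KK <> 0%nat) by (intro e; rewrite e in h; lra).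
    destruct (loc_oc 1 KK x ltac:(lia) ltac:(lia) ltac:(simpl; lra)) as [c [hc1 hc2]].
    exists c, (x - XX (c - 1)). repeat split; try lia; try lra. all: simpl; lra.
Qed.

Lemma vgap i : (i <= KK)%nat -> exists g, 0 < g /\ forall d, 0 < d < g -> ox (S i) (XX i + d) /\ ox i (XX i - d).
Proof.
  intro hi.
  set (g1 := if Nat.ltb i KK then XX (S i) - XX i else 1).
  set (g2 := if Nat.eqb i 0 then 1 else XX i - XX (i - 1)).
  assert (0 < g1). { unfold g1. destruct (Nat.ltb_spec i KK); [|lra]. assert (XX i < XX (S i)) by (apply Xlt; lia). lra. }
  assert (0 < g2). { unfold g2. destruct (Nat.eqb_spec i 0); [lra|]. assert (XX (i-1) < XX i) by (apply Xlt; lia). lra. }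
  exists (Rmin g1 g2). split; [apply Rmin_glb_lt; auto|]. intros d hd.
  pose proof (Rmin_l g1 g2); pose proof (Rmin_r g1 g2).
  split.
  - unfold ox. destruct (Nat.ltb_spec i KK).
    + right; left. split; [lia|]. replace (S i - 1)%nat with i by lia. unfold g1 in *.
      destruct (Nat.ltb_spec i KK); [|lia]. lra.
    + right; right. split; [lia|]. replace KK with i by lia. lra.
  - unfold ox. destruct (Nat.eqb_spec i 0).
    + left. subst. split; auto. lra.
    + right; left. split; [lia|]. unfold g2 in *. destruct (Nat.eqb_spec i 0); [lia|]. lra.
Qed.

End Grid1.

Open Scope R_scope.

Definition qbit (m : Mod) (sx sy : bool) : bool :=
  match m with
  | Mfull => true | Mempty => false
  | Mhx s => Bool.eqb sx s | Mhy s => Bool.eqb sy s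
  | Mqd s t => Bool.eqb sx s && Bool.eqb sy t
  | Mtq s t => negb (Bool.eqb sx s && Bool.eqb sy t) end.

Lemma qbit_spec m sx sy d : 0 < d -> (mdl m (sg sx d) (sg sy d) <-> qbit m sx sy = true).
Proof.
  intro hd. destruct m; simpl; unfold model_full, model_empty, model_halfx, model_halfy, model_quadrant, model_threequad;
  try destruct s; try destruct t; destruct sx, sy; simpl; split; intros; try tauto; try lra; try discriminate;
  try (destruct H; lra); try (exfalso; apply H; lra); try (intros [? ?]; lra).
Qed.

Section Main.
Local Set Default Proof Using "All".
Variable P : point -> Prop.
Variable Mb : R.
Hypothesis Hbd : forall q, P q -> Rabs (fst q) <= Mb /\ Rabs (snd q) <= Mb.
Hypothesis Hmod : forall p, exists m, locally_like P p (mdl m).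
Variable l : list point.
Hypothesis Hl : forall p, In p l <-> corner P p.
Hypothesis HPne : exists q, P q.

Definition Xs := srt (map fst l).
Definition Ys := srt (map snd l).
Definition K := KK Xs.
Definition Mm := KK Ys.
Definition X := XX Xs.
Definition Y := XX Ys.

Lemma corner_XY p : corner P p -> In (fst p) Xs /\ In (snd p) Ys.
Proof.
  intro h. apply Hl in h. unfold Xs, Ys. rewrite !srt_In. split; apply in_map; auto.
Qed.

Lemma bd_cases b : boundary_pt P b ->
  (exists s, locally_like P b (mdl (Mhx s))) \/ (exists s, locally_like P b (mdl (Mhy s))) \/ corner P b.
Proof.
  intros [hb hi]. destruct (Hmod b) as [m hm]. destruct m.
  - exfalso; apply hi; exact hm.
  - exfalso. apply ll_pt in hm. simpl in hm. unfold model_empty in hm. tauto.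
  - left; eauto.
  - right; left; eauto.
  - right; right. exists s, t; left; exact hm.
  - right; right. exists s, t; right; exact hm.
Qed.


Lemma follow_up x0 y0 s : locally_like P (x0, y0) (mdl (Mhx s)) -> exists t, 0 <= t /\ corner P (x0, y0 + t).
Proof.
  intro h. destruct (follow P Mb Hbd Hmod x0 y0 0 1 s (Mhx s)) as [t [ht hc]]; [left; repeat split; auto | exact h |].
  exists t; split; auto. replace (x0, y0 + t) with (x0 + 0 * t, y0 + 1 * t) by (f_equal; ring). auto.
Qed.
Lemma follow_down x0 y0 s : locally_like P (x0, y0) (mdl (Mhx s)) -> exists t, 0 <= t /\ corner P (x0, y0 - t).
Proof.
  intro h. destruct (follow P Mb Hbd Hmod x0 y0 0 (-1) s (Mhx s)) as [t [ht hc]]; [left; repeat split; auto | exact h |].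
  exists t; split; auto. replace (x0, y0 - t) with (x0 + 0 * t, y0 + -1 * t) by (f_equal; ring). auto.
Qed.
Lemma follow_right x0 y0 s : locally_like P (x0, y0) (mdl (Mhy s)) -> exists t, 0 <= t /\ corner P (x0 + t, y0).
Proof.
  intro h. destruct (follow P Mb Hbd Hmod x0 y0 1 0 s (Mhy s)) as [t [ht hc]]; [right; repeat split; auto | exact h |].
  exists t; split; auto. replace (x0 + t, y0) with (x0 + 1 * t, y0 + 0 * t) by (f_equal; ring). auto.
Qed.
Lemma follow_left x0 y0 s : locally_like P (x0, y0) (mdl (Mhy s)) -> exists t, 0 <= t /\ corner P (x0 - t, y0).
Proof.
  intro h. destruct (follow P Mb Hbd Hmod x0 y0 (-1) 0 s (Mhy s)) as [t [ht hc]]; [right; repeat split; auto | exact h |].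
  exists t; split; auto. replace (x0 - t, y0) with (x0 + -1 * t, y0 + 0 * t) by (f_equal; ring). auto.
Qed.

Lemma bd_coord b : boundary_pt P b -> (exists c, corner P c /\ fst c = fst b) \/ (exists c, corner P c /\ snd c = snd b).
Proof.
  intro h. destruct b as [x0 y0]. destruct (bd_cases _ h) as [[s hs]|[[s hs]|hc]].
  - destruct (follow_up _ _ _ hs) as [t [_ ht]].
    left; eexists; split; [exact ht|]; reflexivity.
  - destruct (follow_right _ _ _ hs) as [t [_ ht]].
    right; eexists; split; [exact ht|]; reflexivity.
  - left; exists (x0, y0); auto.
Qed.

Lemma far_out x y : (x < -Mb \/ Mb < x \/ y < -Mb \/ Mb < y) -> ~ P (x, y).
Proof. intros h hp. apply Hbd in hp. simpl in hp. destruct hp as [h1 h2]. rabs. lra. Qed.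

Lemma Mb_pos : 0 <= Mb.
Proof. destruct HPne as [q hq]. apply Hbd in hq. pose proof (Rabs_pos (fst q)). lra. Qed.

Lemma bb_left q : P q -> exists c, corner P c /\ fst c <= fst q.
Proof.
  intro hq. destruct q as [x y]. pose proof (Hbd _ hq) as [hx hy]; simpl in *. rabs.
  destruct (segment P Hmod (-(Mb+1)) y 1 0 (x + Mb + 1)) as [t [ht hb]].
  - rabs; lra. - rabs; lra. - lra.
  - replace (-(Mb+1) + 1 * (x + Mb + 1)) with x by ring. replace (y + 0 * (x + Mb + 1)) with y by ring.
    intro h. eapply far_out; [|apply h; exact hq]. lra.
  - destruct (bd_cases _ hb) as [[s hs]|[[s hs]|hc]].
    + destruct (follow_up _ _ _ hs) as [t' [ht0 ht']].
      eexists; split; [exact ht'|]. simpl. lra.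
    + destruct (follow_left _ _ _ hs) as [t' [ht0 ht']].
      eexists; split; [exact ht'|]. simpl. lra.
    + eexists; split; [exact hc|]. simpl; lra.
Qed.

Lemma bb_right q : P q -> exists c, corner P c /\ fst q <= fst c.
Proof.
  intro hq. destruct q as [x y]. pose proof (Hbd _ hq) as [hx hy]; simpl in *. rabs.
  destruct (segment P Hmod (Mb+1) y (-1) 0 (Mb + 1 - x)) as [t [ht hb]].
  - rabs; lra. - rabs; lra. - lra.
  - replace (Mb+1 + -1 * (Mb + 1 - x)) with x by ring. replace (y + 0 * (Mb + 1 - x)) with y by ring.
    intro h. eapply far_out; [|apply h; exact hq]. lra.
  - destruct (bd_cases _ hb) as [[s hs]|[[s hs]|hc]].
    + destruct (follow_up _ _ _ hs) as [t' [ht0 ht']].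
      eexists; split; [exact ht'|]. simpl. lra.
    + destruct (follow_right _ _ _ hs) as [t' [ht0 ht']].
      eexists; split; [exact ht'|]. simpl. lra.
    + eexists; split; [exact hc|]. simpl; lra.
Qed.

Lemma bb_down q : P q -> exists c, corner P c /\ snd c <= snd q.
Proof.
  intro hq. destruct q as [x y]. pose proof (Hbd _ hq) as [hx hy]; simpl in *. rabs.
  destruct (segment P Hmod x (-(Mb+1)) 0 1 (y + Mb + 1)) as [t [ht hb]].
  - rabs; lra. - rabs; lra. - lra.
  - replace (-(Mb+1) + 1 * (y + Mb + 1)) with y by ring. replace (x + 0 * (y + Mb + 1)) with x by ring.
    intro h. eapply far_out; [|apply h; exact hq]. lra.
  - destruct (bd_cases _ hb) as [[s hs]|[[s hs]|hc]].
    + destruct (follow_down _ _ _ hs) as [t' [ht0 ht']].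
      eexists; split; [exact ht'|]. simpl. lra.
    + destruct (follow_right _ _ _ hs) as [t' [ht0 ht']].
      eexists; split; [exact ht'|]. simpl. lra.
    + eexists; split; [exact hc|]. simpl; lra.
Qed.

Lemma bb_up q : P q -> exists c, corner P c /\ snd q <= snd c.
Proof.
  intro hq. destruct q as [x y]. pose proof (Hbd _ hq) as [hx hy]; simpl in *. rabs.
  destruct (segment P Hmod x (Mb+1) 0 (-1) (Mb + 1 - y)) as [t [ht hb]].
  - rabs; lra. - rabs; lra. - lra.
  - replace (Mb+1 + -1 * (Mb + 1 - y)) with y by ring. replace (x + 0 * (Mb + 1 - y)) with x by ring.
    intro h. eapply far_out; [|apply h; exact hq]. lra.
  - destruct (bd_cases _ hb) as [[s hs]|[[s hs]|hc]].
    + destruct (follow_up _ _ _ hs) as [t' [ht0 ht']].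
      eexists; split; [exact ht'|]. simpl. lra.
    + destruct (follow_right _ _ _ hs) as [t' [ht0 ht']].
      eexists; split; [exact ht'|]. simpl. lra.
    + eexists; split; [exact hc|]. simpl; lra.
Qed.

Lemma Xs_sorted : StronglySorted Rlt Xs.
Proof. apply srt_sorted. Qed.
Lemma Ys_sorted : StronglySorted Rlt Ys.
Proof. apply srt_sorted. Qed.
Lemma Xs_ne : (1 <= length Xs)%nat.
Proof.
  destruct HPne as [q hq]. destruct (bb_left q hq) as [c [hc _]]. apply corner_XY in hc.
  destruct Xs; simpl in *; [tauto|lia].
Qed.
Lemma Ys_ne : (1 <= length Ys)%nat.
Proof.
  destruct HPne as [q hq]. destruct (bb_left q hq) as [c [hc _]]. apply corner_XY in hc.
  destruct Ys; simpl in *; [tauto|lia].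
Qed.

Lemma bbox q : P q -> X 0 <= fst q <= X K /\ Y 0 <= snd q <= Y Mm.
Proof.
  intro hq.
  destruct (bb_left q hq) as [c1 [h1 e1]]. destruct (bb_right q hq) as [c2 [h2 e2]].
  destruct (bb_down q hq) as [c3 [h3 e3]]. destruct (bb_up q hq) as [c4 [h4 e4]].
  apply corner_XY in h1, h2, h3, h4.
  pose proof (Xbounds Xs Xs_sorted Xs_ne _ (proj1 h1)).
  pose proof (Xbounds Xs Xs_sorted Xs_ne _ (proj1 h2)).
  pose proof (Xbounds Ys Ys_sorted Ys_ne _ (proj2 h3)).
  pose proof (Xbounds Ys Ys_sorted Ys_ne _ (proj2 h4)).
  unfold X, Y, K, Mm. lra.
Qed.

Lemma conv_between A B u v lam : A < u < B -> A < v < B -> 0 <= lam <= 1 -> A < u + lam * (v - u) < B.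
Proof.
  intros h1 h2 h3.
  destruct (Req_dec lam 0) as [->|hl]; [lra|].
  assert (0 < lam) by lra.
  assert (0 <= (1 - lam) * (u - A)) by (apply Rmult_le_pos; lra).
  assert (0 < lam * (v - A)) by (apply Rmult_lt_0_compat; lra).
  assert (0 <= (1 - lam) * (B - u)) by (apply Rmult_le_pos; lra).
  assert (0 < lam * (B - v)) by (apply Rmult_lt_0_compat; lra).
  split; nra.
Qed.

Lemma open_cell_P c j q1 q2 : (1 <= c <= K)%nat -> (1 <= j <= Mm)%nat ->
  X (c - 1) < fst q1 < X c -> Y (j - 1) < snd q1 < Y j ->
  X (c - 1) < fst q2 < X c -> Y (j - 1) < snd q2 < Y j -> (P q1 <-> P q2).
Proof.
  intros hc hj h1 h2 h3 h4. apply NNPP; intro hne.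
  destruct q1 as [x1 y1], q2 as [x2 y2]; simpl in *.
  set (L := Rabs (x2 - x1) + Rabs (y2 - y1) + 1).
  assert (hL : 1 <= L) by (unfold L; pose proof (Rabs_pos (x2 - x1)); pose proof (Rabs_pos (y2 - y1)); lra).
  destruct (segment P Hmod x1 y1 ((x2 - x1) / L) ((y2 - y1) / L) L) as [t [ht hb]].
  - unfold Rdiv. rewrite Rabs_mult, Rabs_inv, (Rabs_right L) by lra.
    apply (Rmult_le_reg_r L); [lra|]. rewrite Rmult_assoc, Rinv_l, Rmult_1_r by lra. unfold L.
    pose proof (Rabs_pos (y2 - y1)); lra.
  - unfold Rdiv. rewrite Rabs_mult, Rabs_inv, (Rabs_right L) by lra.
    apply (Rmult_le_reg_r L); [lra|]. rewrite Rmult_assoc, Rinv_l, Rmult_1_r by lra. unfold L.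
    pose proof (Rabs_pos (x2 - x1)); lra.
  - lra.
  - replace (x1 + (x2 - x1) / L * L) with x2 by (field; lra).
    replace (y1 + (y2 - y1) / L * L) with y2 by (field; lra). exact hne.
  - assert (e1 : x1 + (x2 - x1) / L * t = x1 + (t / L) * (x2 - x1)) by (field; lra).
    assert (e2 : y1 + (y2 - y1) / L * t = y1 + (t / L) * (y2 - y1)) by (field; lra).
    assert (hlam : 0 <= t / L <= 1).
    { split. apply Rmult_le_pos; [lra| left; apply Rinv_0_lt_compat; lra].
      apply (Rmult_le_reg_r L); [lra|]. unfold Rdiv. rewrite Rmult_assoc, Rinv_l by lra. lra. }
    rewrite e1, e2 in hb.
    pose proof (conv_between _ _ _ _ _ h1 h3 hlam) as hx.
    pose proof (conv_between _ _ _ _ _ h2 h4 hlam) as hy.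
    destruct (bd_coord _ hb) as [[cc [hcc e]]|[cc [hcc e]]]; apply corner_XY in hcc; simpl in e.
    + apply (Xbetween Xs Xs_sorted Xs_ne (fst cc) c (proj1 hcc) hc). rewrite e. exact hx.
    + apply (Xbetween Ys Ys_sorted Ys_ne (snd cc) j (proj2 hcc) hj). rewrite e. exact hy.
Qed.

Definition center c j := ((X (c - 1) + X c) / 2, (Y (j - 1) + Y j) / 2).

Definition Fb (c j : nat) : bool :=
  if (1 <=? c)%nat && (c <=? K)%nat && (1 <=? j)%nat && (j <=? Mm)%nat
  then (if excluded_middle_informative (P (center c j)) then true else false) else false.

Lemma cell_status c j q : (c <= S K)%nat -> (j <= S Mm)%nat -> ox Xs c (fst q) -> ox Ys j (snd q) ->
  (P q <-> Fb c j = true).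
Proof.
  intros hc hj ox1 oy1. unfold Fb.
  destruct ((1 <=? c)%nat && (c <=? K)%nat && (1 <=? j)%nat && (j <=? Mm)%nat) eqn:E.
  - rewrite !andb_true_iff, !Nat.leb_le in E. unfold K, Mm in E.
    assert (hx : X (c - 1) < fst q < X c).
    { destruct ox1 as [[-> h]|[[h1 h]|[-> h]]]; [lia| exact h | lia]. }
    assert (hy : Y (j - 1) < snd q < Y j).
    { destruct oy1 as [[-> h]|[[h1 h]|[-> h]]]; [lia| exact h | lia]. }
    assert (X (c-1) < X c) by (apply Xlt; auto using Xs_sorted, Xs_ne; lia).
    assert (Y (j-1) < Y j) by (apply Xlt; auto using Ys_sorted, Ys_ne; lia).
    destruct (excluded_middle_informative (P (center c j))) as [hp|hp].
    + split; auto; intros _. apply (open_cell_P c j (center c j) q); auto; unfold center; simpl;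
      try (unfold K, Mm; lia); lra.
    + split; [|discriminate]. intro hq. exfalso; apply hp.
      apply (open_cell_P c j q (center c j)); auto; unfold center; simpl; try (unfold K, Mm; lia); lra.
  - split; [|discriminate]. intro hp. apply bbox in hp. unfold X, Y, K, Mm in *.
    destruct ox1 as [[-> h]|[[h1 h]|[-> h]]]; try lra.
    destruct oy1 as [[-> g]|[[g1 g]|[-> g]]]; try lra.
    assert (true = false); [|discriminate]. rewrite <- E. symmetry. rewrite !andb_true_iff, !Nat.leb_le. unfold K, Mm; lia.
Qed.

Lemma approx2 c j q e : cx Xs c (fst q) -> cx Ys j (snd q) -> 0 < e ->
  exists q', ox Xs c (fst q') /\ ox Ys j (snd q') /\ Rabs (fst q' - fst q) < e /\ Rabs (snd q' - snd q) < e.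
Proof.
  intros h1 h2 he.
  destruct (cx_approx Xs Xs_sorted Xs_ne c (fst q) h1 e he) as [x' [hx1 hx2]].
  destruct (cx_approx Ys Ys_sorted Ys_ne j (snd q) h2 e he) as [y' [hy1 hy2]].
  exists (x', y'); simpl; auto.
Qed.

Lemma IN c j q : (c <= S K)%nat -> (j <= S Mm)%nat -> cx Xs c (fst q) -> cx Ys j (snd q) -> Fb c j = true -> P q.
Proof.
  intros hc hj h1 h2 hF. destruct (Hmod q) as [m [eps [he HL]]].
  destruct m.
  - apply ll_pt with (M := mdl Mfull); [exists eps; split; auto| exact I].
  - exfalso. destruct (approx2 c j q eps h1 h2 he) as [q' [o1 [o2 [d1 d2]]]].
    apply (HL q' d1 d2). apply (cell_status c j q'); auto.
  - apply (proj2 (ll_pt _ _ _ (ex_intro _ eps (conj he HL)))). apply mdl00; discriminate.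
  - apply (proj2 (ll_pt _ _ _ (ex_intro _ eps (conj he HL)))). apply mdl00; discriminate.
  - apply (proj2 (ll_pt _ _ _ (ex_intro _ eps (conj he HL)))). apply mdl00; discriminate.
  - apply (proj2 (ll_pt _ _ _ (ex_intro _ eps (conj he HL)))). apply mdl00; discriminate.
Qed.

Lemma NI c j q : (c <= S K)%nat -> (j <= S Mm)%nat -> cx Xs c (fst q) -> cx Ys j (snd q) -> Fb c j = false ->
  ~ interior_pt P q.
Proof.
  intros hc hj h1 h2 hF [eps [he HL]].
  destruct (approx2 c j q eps h1 h2 he) as [q' [o1 [o2 [d1 d2]]]].
  assert (P q') by (apply (HL q' d1 d2); exact I).
  apply (cell_status c j q') in H; auto. congruence.
Qed.

Lemma qbit_ne m : m <> Mempty -> exists sx sy, qbit m sx sy = true.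
Proof.
  intro h. destruct m; try congruence.
  - exists true, true; reflexivity.
  - exists s, true; simpl; apply Bool.eqb_reflx.
  - exists true, s; simpl; apply Bool.eqb_reflx.
  - exists s, t; simpl; rewrite !Bool.eqb_reflx; reflexivity.
  - exists s, (negb t); simpl; rewrite Bool.eqb_reflx; destruct t; reflexivity.
Qed.

Lemma FactU q : P q -> exists c j, (1 <= c <= K)%nat /\ (1 <= j <= Mm)%nat /\
  X (c - 1) <= fst q <= X c /\ Y (j - 1) <= snd q <= Y j /\ Fb c j = true.
Proof.
  intro hq. destruct (Hmod q) as [m [eps [he HL]]].
  assert (hm : m <> Mempty).
  { intro e; subst. apply (HL q); rewrite ?Rminus_diag, ?Rabs_R0; auto. }
  destruct (qbit_ne m hm) as [sx [sy hb]].
  assert (Hpt : forall d, 0 < d < eps -> P (fst q + sg sx d, snd q + sg sy d)).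
  { intros d hd. apply HL; simpl.
    - replace (fst q + sg sx d - fst q) with (sg sx d) by ring. destruct sx; simpl; rabs; lra.
    - replace (snd q + sg sy d - snd q) with (sg sy d) by ring. destruct sy; simpl; rabs; lra.
    - replace (fst q + sg sx d - fst q) with (sg sx d) by ring.
      replace (snd q + sg sy d - snd q) with (sg sy d) by ring. apply qbit_spec; [lra|auto]. }
  pose proof (bbox q hq) as [bx by_].
  assert (hd : 0 < eps / 2 < eps) by lra.
  pose proof (bbox _ (Hpt _ hd)) as [bx' by']. simpl in bx', by'.
  destruct (side_pick Xs Xs_ne sx (fst q)) as [c [gx [hc [hgx [hcx hx]]]]].
  { exact bx. }
  { intro e; subst; simpl in bx'; unfold X, K in *; lra. }
  { intro e; subst; simpl in bx'; unfold X, K in *; lra. }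
  destruct (side_pick Ys Ys_ne sy (snd q)) as [j [gy [hj [hgy [hjy hy]]]]].
  { exact by_. }
  { intro e; subst; simpl in by'; unfold Y, Mm in *; lra. }
  { intro e; subst; simpl in by'; unfold Y, Mm in *; lra. }
  set (d := Rmin eps (Rmin gx gy) / 2).
  assert (0 < Rmin eps (Rmin gx gy)) by (repeat apply Rmin_glb_lt; lra).
  pose proof (Rmin_l eps (Rmin gx gy)). pose proof (Rmin_r eps (Rmin gx gy)).
  pose proof (Rmin_l gx gy). pose proof (Rmin_r gx gy).
  assert (hd1 : 0 < d < eps) by (unfold d; lra).
  exists c, j. repeat split; try (unfold K, Mm in *; lia); try apply hcx; try apply hjy.
  apply (cell_status c j (fst q + sg sx d, snd q + sg sy d)); simpl.
  - unfold K in *; lia.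
  - unfold Mm in *; lia.
  - right; left. split; [auto|]. apply hx. unfold d; lra.
  - right; left. split; [auto|]. apply hy. unfold d; lra.
  - apply Hpt; auto.
Qed.

Lemma vertex i j m : (i <= K)%nat -> (j <= Mm)%nat -> locally_like P (X i, Y j) (mdl m) ->
  forall sx sy : bool, Fb (if sx then S i else i) (if sy then S j else j) = qbit m sx sy.
Proof.
  intros hi hj [eps [he HL]] sx sy.
  destruct (vgap Xs Xs_sorted Xs_ne i hi) as [gx [hgx Hx]].
  destruct (vgap Ys Ys_sorted Ys_ne j hj) as [gy [hgy Hy]].
  set (d := Rmin eps (Rmin gx gy) / 2).
  assert (0 < Rmin eps (Rmin gx gy)) by (repeat apply Rmin_glb_lt; lra).
  pose proof (Rmin_l eps (Rmin gx gy)). pose proof (Rmin_r eps (Rmin gx gy)).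
  pose proof (Rmin_l gx gy). pose proof (Rmin_r gx gy).
  assert (hd1 : 0 < d) by (unfold d; lra).
  destruct (Hx d ltac:(unfold d; lra)) as [ox1 ox2].
  destruct (Hy d ltac:(unfold d; lra)) as [oy1 oy2].
  apply Bool.eq_iff_eq_true. rewrite <- (qbit_spec m sx sy d hd1).
  rewrite <- (cell_status _ _ (X i + sg sx d, Y j + sg sy d)).
  - rewrite (HL (X i + sg sx d, Y j + sg sy d)); simpl;
    replace (X i + sg sx d - X i) with (sg sx d) by ring;
    replace (Y j + sg sy d - Y j) with (sg sy d) by ring; try reflexivity;
    [destruct sx | destruct sy]; simpl; rabs; unfold d; lra.
  - destruct sx; unfold K in *; lia.
  - destruct sy; unfold Mm in *; lia.
  - destruct sx; simpl; [exact ox1|]. replace (X i + - d) with (XX Xs i - d) by (unfold X; ring). exact ox2.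
  - destruct sy; simpl; [exact oy1|]. replace (Y j + - d) with (XX Ys j - d) by (unfold Y; ring). exact oy2.
Qed.

Lemma vertex_facts i j : (i <= K)%nat -> (j <= Mm)%nat ->
  ~ (Fb i j = true /\ Fb (S i) (S j) = true /\ Fb (S i) j = false /\ Fb i (S j) = false) /\
  ~ (Fb (S i) j = true /\ Fb i (S j) = true /\ Fb i j = false /\ Fb (S i) (S j) = false) /\
  ((cnt Fb i j = 1 \/ cnt Fb i j = 3)%nat -> corner P (X i, Y j)).
Proof.
  intros hi hj. destruct (Hmod (X i, Y j)) as [m hm].
  pose proof (vertex i j m hi hj hm) as V.
  pose proof (V true true) as V1; pose proof (V true false) as V2;
  pose proof (V false true) as V3; pose proof (V false false) as V4. simpl in V1, V2, V3, V4.
  unfold cnt. rewrite V1, V2, V3, V4.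
  destruct m; try destruct s; try destruct t; simpl; repeat split; try (intros [? [? [? ?]]]; discriminate);
  try (intros [h|h]; discriminate);
  intros _; eexists; eexists; (left + right); exact hm.
Qed.

End Main.

Open Scope R_scope.

Lemma floor_ex x : exists k : Z, IZR k <= x < IZR k + 1.
Proof.
  destruct (archimed x) as [h1 h2]. exists (up x - 1)%Z. rewrite minus_IZR. simpl. lra.
Qed.

Lemma poly_strip_x P : polyomino P -> forall k A B, IZR k < fst A < IZR k + 1 -> IZR k < fst B < IZR k + 1 ->
  snd A = snd B -> P A -> P B.
Proof.
  intros [cells Hc] k A B hA hB e hPA. apply Hc in hPA. destruct hPA as [[i j] [hin hcell]].
  apply Hc. exists (i, j); split; auto. unfold cell in *; simpl in *.
  assert (i = k).
  { assert (IZR i < IZR (k + 1)) by (rewrite plus_IZR; simpl; lra).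
    assert (IZR k < IZR (i + 1)) by (rewrite plus_IZR; simpl; lra).
    apply lt_IZR in H; apply lt_IZR in H0. lia. }
  subst. rewrite <- e. lra.
Qed.

Lemma poly_strip_y P : polyomino P -> forall k A B, IZR k < snd A < IZR k + 1 -> IZR k < snd B < IZR k + 1 ->
  fst A = fst B -> P A -> P B.
Proof.
  intros [cells Hc] k A B hA hB e hPA. apply Hc in hPA. destruct hPA as [[i j] [hin hcell]].
  apply Hc. exists (i, j); split; auto. unfold cell in *; simpl in *.
  assert (j = k).
  { assert (IZR j < IZR (k + 1)) by (rewrite plus_IZR; simpl; lra).
    assert (IZR k < IZR (j + 1)) by (rewrite plus_IZR; simpl; lra).
    apply lt_IZR in H; apply lt_IZR in H0. lia. }
  subst. rewrite <- e. lra.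
Qed.

Lemma LL_at P p M eps sx sy d : LL P p M eps -> 0 < d < eps ->
  (P (fst p + sg sx d, snd p + sg sy d) <-> M (sg sx d) (sg sy d)).
Proof.
  intros [he HL] hd. rewrite HL; simpl.
  - replace (fst p + sg sx d - fst p) with (sg sx d) by ring.
    replace (snd p + sg sy d - snd p) with (sg sy d) by ring. reflexivity.
  - replace (fst p + sg sx d - fst p) with (sg sx d) by ring. destruct sx; simpl; rabs; lra.
  - replace (snd p + sg sy d - snd p) with (sg sy d) by ring. destruct sy; simpl; rabs; lra.
Qed.

Lemma poly_corner P p : polyomino P -> corner P p -> (exists z, fst p = IZR z) /\ (exists z, snd p = IZR z).
Proof.
  intros hpoly [s [t hc]].
  assert (hm : exists m, locally_like P p (mdl m) /\
     (exists sx sy, qbit m sx sy = true /\ qbit m (negb sx) sy = false) /\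
     (exists sx sy, qbit m sx sy = true /\ qbit m sx (negb sy) = false)).
  { destruct hc as [hc|hc].
    - exists (Mqd s t). split; [exact hc|]. simpl. split; exists s, t; destruct s, t; simpl; auto.
    - exists (Mtq s t). split; [exact hc|]. simpl. split; [exists (negb s), t | exists s, (negb t)]; destruct s, t; simpl; auto. }
  destruct hm as [m [[eps HL] [[sx [sy [h1 h2]]] [tx [ty [g1 g2]]]]]].
  assert (he : 0 < eps) by apply HL.
  split.
  - apply NNPP; intro hn.
    destruct (floor_ex (fst p)) as [k hk].
    assert (hk2 : IZR k < fst p) by (destruct (Req_dec (IZR k) (fst p)); [exfalso; apply hn; eauto| lra]).
    set (d := Rmin eps (Rmin (fst p - IZR k) (IZR k + 1 - fst p)) / 2).
    assert (0 < Rmin eps (Rmin (fst p - IZR k) (IZR k + 1 - fst p))) by (repeat apply Rmin_glb_lt; lra).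
    pose proof (Rmin_l eps (Rmin (fst p - IZR k) (IZR k + 1 - fst p))).
    pose proof (Rmin_r eps (Rmin (fst p - IZR k) (IZR k + 1 - fst p))).
    pose proof (Rmin_l (fst p - IZR k) (IZR k + 1 - fst p)). pose proof (Rmin_r (fst p - IZR k) (IZR k + 1 - fst p)).
    assert (hd : 0 < d < eps) by (unfold d; lra).
    assert (hA : P (fst p + sg sx d, snd p + sg sy d)).
    { apply (LL_at P p _ eps sx sy d HL hd). apply qbit_spec; [lra|auto]. }
    assert (hB : ~ P (fst p + sg (negb sx) d, snd p + sg sy d)).
    { intro hB. apply (LL_at P p _ eps _ _ d HL hd) in hB. apply qbit_spec in hB; [congruence|lra]. }
    apply hB. apply (poly_strip_x P hpoly k (fst p + sg sx d, snd p + sg sy d)); auto; simpl; destruct sx; simpl; unfold d in *; lra.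
  - apply NNPP; intro hn.
    destruct (floor_ex (snd p)) as [k hk].
    assert (hk2 : IZR k < snd p) by (destruct (Req_dec (IZR k) (snd p)); [exfalso; apply hn; eauto| lra]).
    set (d := Rmin eps (Rmin (snd p - IZR k) (IZR k + 1 - snd p)) / 2).
    assert (0 < Rmin eps (Rmin (snd p - IZR k) (IZR k + 1 - snd p))) by (repeat apply Rmin_glb_lt; lra).
    pose proof (Rmin_l eps (Rmin (snd p - IZR k) (IZR k + 1 - snd p))).
    pose proof (Rmin_r eps (Rmin (snd p - IZR k) (IZR k + 1 - snd p))).
    pose proof (Rmin_l (snd p - IZR k) (IZR k + 1 - snd p)). pose proof (Rmin_r (snd p - IZR k) (IZR k + 1 - snd p)).
    assert (hd : 0 < d < eps) by (unfold d; lra).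
    assert (hA : P (fst p + sg tx d, snd p + sg ty d)).
    { apply (LL_at P p _ eps tx ty d HL hd). apply qbit_spec; [lra|auto]. }
    assert (hB : ~ P (fst p + sg tx d, snd p + sg (negb ty) d)).
    { intro hB. apply (LL_at P p _ eps _ _ d HL hd) in hB. apply qbit_spec in hB; [congruence|lra]. }
    apply hB. apply (poly_strip_y P hpoly k (fst p + sg tx d, snd p + sg ty d)); auto; simpl; destruct ty; simpl; unfold d in *; lra.
Qed.

Definition zr (a b : Z) : list Z := map (fun k => (a + Z.of_nat k)%Z) (seq 0 (Z.to_nat (b - a))).

Lemma zr_in a b i : In i (zr a b) <-> (a <= i < b)%Z.
Proof.
  unfold zr. rewrite in_map_iff. split.
  - intros [k [<- hk]]. apply in_seq in hk. lia.
  - intro h. exists (Z.to_nat (i - a)). split; [lia|]. apply in_seq. lia.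
Qed.

Lemma floor_in a b x : (a < b)%Z -> IZR a <= x <= IZR b -> exists i, (a <= i < b)%Z /\ IZR i <= x <= IZR i + 1.
Proof.
  intros hab hx. destruct (floor_ex x) as [k hk].
  destruct (Z_lt_le_dec k b).
  - exists k. split; [|lra]. split; auto.
    assert (IZR a < IZR (k + 1)) by (rewrite plus_IZR; simpl; lra). apply lt_IZR in H. lia.
  - apply IZR_le in l. exists (b - 1)%Z. split; [lia|]. rewrite minus_IZR. simpl. lra.
Qed.

Lemma rect_poly a b c d : (a < b)%Z -> (c < d)%Z -> polyomino (in_rect (IZR a, IZR b, IZR c, IZR d)).
Proof.
  intros hab hcd. exists (list_prod (zr a b) (zr c d)). intro q. simpl. split.
  - intros [hx hy]. destruct (floor_in a b (fst q) hab hx) as [i [hi hqi]].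
    destruct (floor_in c d (snd q) hcd hy) as [j [hj hqj]].
    exists (i, j). split; [apply in_prod; apply zr_in; auto|]. unfold cell; simpl; auto.
  - intros [[i j] [hin hcell]]. apply in_prod_iff in hin. destruct hin as [h1 h2].
    apply zr_in in h1; apply zr_in in h2. unfold cell in hcell; simpl in hcell.
    assert (IZR a <= IZR i) by (apply IZR_le; lia). assert (IZR (i + 1) <= IZR b) by (apply IZR_le; lia).
    assert (IZR c <= IZR j) by (apply IZR_le; lia). assert (IZR (j + 1) <= IZR d) by (apply IZR_le; lia).
    rewrite plus_IZR in *. simpl in *. lra.
Qed.

Open Scope R_scope.

Section Final.
Local Set Default Proof Using "All".
Variable P : point -> Prop.
Variable Mb : R.
Hypothesis Hbd : forall q, P q -> Rabs (fst q) <= Mb /\ Rabs (snd q) <= Mb.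
Hypothesis Hmod : forall p, exists m, locally_like P p (mdl m).
Variable l : list point.
Hypothesis Hl : forall p, In p l <-> corner P p.
Hypothesis HPne : exists q, P q.
Hypothesis Hnd : NoDup l.

Let F := Fb P l.
Let K0 := K l.
Let M0 := Mm l.
Let XS := Xs_sorted P Mb Hbd Hmod l Hl HPne.
Let XN := Xs_ne P Mb Hbd Hmod l Hl HPne.
Let YS := Ys_sorted P Mb Hbd Hmod l Hl HPne.
Let YN := Ys_ne P Mb Hbd Hmod l Hl HPne.

Lemma Fb_range c j : F c j = true -> (1 <= c <= K0 /\ 1 <= j <= M0)%nat.
Proof.
  unfold F, Fb. destruct ((1 <=? c)%nat && (c <=? K l)%nat && (1 <=? j)%nat && (j <=? Mm l)%nat) eqn:E; [|discriminate].
  intros _. rewrite !andb_true_iff, !Nat.leb_le in E. unfold K0, M0; lia.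
Qed.

Lemma hF0c : forall j, F 0 j = false.
Proof. intro j. destruct (F 0 j) eqn:E; auto; apply Fb_range in E; lia. Qed.
Lemma hFc0 : forall c, F c 0 = false.
Proof. intro j. destruct (F j 0) eqn:E; auto; apply Fb_range in E; lia. Qed.
Lemma hFK : forall c j, (K0 < c)%nat -> F c j = false.
Proof. intros c j h. destruct (F c j) eqn:E; auto; apply Fb_range in E; lia. Qed.
Lemma hFM : forall c j, (M0 < j)%nat -> F c j = false.
Proof. intros c j h. destruct (F c j) eqn:E; auto; apply Fb_range in E; lia. Qed.
Lemma hND1 : forall i j, ~ (F i j = true /\ F (S i) (S j) = true /\ F (S i) j = false /\ F i (S j) = false).
Proof.
  intros i j h. pose proof (Fb_range _ _ (proj1 h)).
  apply (proj1 (vertex_facts P Mb Hbd Hmod l Hl HPne i j ltac:(unfold K0, K in *; lia) ltac:(unfold M0, Mm in *; lia))). exact h.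
Qed.
Lemma hND2 : forall i j, ~ (F (S i) j = true /\ F i (S j) = true /\ F i j = false /\ F (S i) (S j) = false).
Proof.
  intros i j h. pose proof (Fb_range _ _ (proj1 h)).
  apply (proj1 (proj2 (vertex_facts P Mb Hbd Hmod l Hl HPne i j ltac:(unfold K0, K in *; lia) ltac:(unfold M0, Mm in *; lia)))). exact h.
Qed.
Lemma hFne : exists c j, F c j = true.
Proof.
  destruct HPne as [q hq]. destruct (FactU P Mb Hbd Hmod l Hl HPne q hq) as [c [j [_ [_ [_ [_ h]]]]]]. eauto.
Qed.

Definition pcs := pieces F K0 M0.
Definition rect_of (t : nat * nat * nat) : rect :=
  match t with (c, a, b) => (X l (c - 1), X l (cE F K0 c a b), Y l a, Y l b) end.
Definition rs := map rect_of pcs.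

Let SP := start_piece F K0 M0 hF0c hFc0 hFK hFM hND1 hND2 hFne.
Let INP := in_pieces F K0 M0 hF0c hFc0 hFK hFM hND1 hND2 hFne.

Lemma odd_le_n : (CONV F K0 M0 + REFL F K0 M0 <= length l)%nat.
Proof.
  set (V := flat_map (fun i => map (fun j => (i, j)) (seq 0 (S M0))) (seq 0 (S K0))).
  set (oddb := fun (v : nat * nat) => let (i, j) := v in convb F i j || reflb F i j).
  assert (E : (CONV F K0 M0 + REFL F K0 M0 = length (filter oddb V))%nat).
  { unfold V. rewrite len_filter_flat'. unfold CONV, REFL. rewrite <- sumn_add. apply sumn_ext. intros i _.
    rewrite len_filter_map. rewrite <- sumn_add. apply sumn_ext. intros j _. simpl.
    unfold convb, reflb. destruct (Nat.eqb_spec (cnt F i j) 1); destruct (Nat.eqb_spec (cnt F i j) 3); simpl; lia. }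
  rewrite E. rewrite <- (length_map (fun v : nat * nat => let (i, j) := v in (X l i, Y l j))).
  apply NoDup_incl_length.
  - apply NoDup_map_NoDup_ForallPairs.
    + intros [i j] [i' j'] h1 h2 e. apply filter_In in h1; apply filter_In in h2.
      destruct h1 as [h1 _]; destruct h2 as [h2 _]. unfold V in h1, h2.
      apply in_flat_map in h1; apply in_flat_map in h2. destruct h1 as [x [hx1 hx2]]; destruct h2 as [y [hy1 hy2]].
      apply in_map_iff in hx2; apply in_map_iff in hy2. destruct hx2 as [jj [e1 hj1]]; destruct hy2 as [jj' [e2 hj2]].
      injection e1 as <- <-. injection e2 as <- <-. apply in_seq in hx1, hy1, hj1, hj2.
      inversion e as [[ex ey]].
      assert (x = y).
      { destruct (lt_eq_lt_dec x y) as [[h|h]|h]; auto.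
        - pose proof (Xlt (Xs l) XS XN x y ltac:(unfold K0, K in *; lia)). unfold X in ex. lra.
        - pose proof (Xlt (Xs l) XS XN y x ltac:(unfold K0, K in *; lia)). unfold X in ex. lra. }
      assert (jj = jj').
      { destruct (lt_eq_lt_dec jj jj') as [[h|h]|h]; auto.
        - pose proof (Xlt (Ys l) YS YN jj jj' ltac:(unfold M0, Mm in *; lia)). unfold Y in ey. lra.
        - pose proof (Xlt (Ys l) YS YN jj' jj ltac:(unfold M0, Mm in *; lia)). unfold Y in ey. lra. }
      subst; auto.
    + apply NoDup_filter. unfold V. apply NoDup_flat_map; [apply seq_NoDup| |].
      * intros i _. apply NoDup_map_NoDup_ForallPairs; [|apply seq_NoDup]. intros x y _ _ h; congruence.
      * intros x y z _ _ h1 h2. apply in_map_iff in h1; apply in_map_iff in h2.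
        destruct h1 as [? [<- _]]; destruct h2 as [? [h _]]; congruence.
  - intros p hp. apply in_map_iff in hp. destruct hp as [[i j] [<- hv]].
    apply filter_In in hv. destruct hv as [hv ho]. unfold V in hv. apply in_flat_map in hv.
    destruct hv as [x [hx hv]]. apply in_map_iff in hv. destruct hv as [jj [e hj]]. injection e as <- <-.
    apply in_seq in hx, hj. apply Hl.
    apply (proj2 (proj2 (vertex_facts P Mb Hbd Hmod l Hl HPne x jj ltac:(unfold K0, K in *; lia) ltac:(unfold M0, Mm in *; lia)))).
    simpl in ho. unfold convb, reflb in ho. apply orb_true_iff in ho. destruct ho as [ho|ho]; apply Nat.eqb_eq in ho; fold F; lia.
Qed.

Lemma count_final : (4 * length rs + 8 <= 3 * length l)%nat.
Proof.
  unfold rs. rewrite length_map. pose proof (disc_count F K0 M0 hF0c hFc0 hFK hFM hND1 hND2 hFne).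
  pose proof odd_le_n. unfold pcs. lia.
Qed.

Lemma rs_in r : In r rs -> exists c a b, r = rect_of (c, a, b) /\ startb F c a b = true.
Proof.
  unfold rs. intro h. apply in_map_iff in h. destruct h as [[[c a] b] [<- h]].
  exists c, a, b; split; auto. apply INP; auto.
Qed.

Lemma wf_rs : forall r, In r rs -> rect_wf r.
Proof.
  intros r h. destruct (rs_in r h) as [c [a [b [-> hs]]]].
  destruct (SP c a b hs) as [h1 [h2 [h3 _]]]. simpl. split.
  - apply (Xlt (Xs l) XS XN). unfold K0, K in *; lia.
  - apply (Xlt (Ys l) YS YN). unfold M0, Mm in *; lia.
Qed.

Lemma cover_rs : forall q, P q <-> exists r, In r rs /\ in_rect r q.
Proof.
  intro q. split.
  - intro hq. destruct (FactU P Mb Hbd Hmod l Hl HPne q hq) as [c [j [hc [hj [hx [hy hF]]]]]].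
    destruct (cover_disc F K0 M0 hF0c hFc0 hFK hFM hND1 hND2 hFne c j hF) as [c1 [a [b [hin [h1 h2]]]]].
    exists (rect_of (c1, a, b)). split; [unfold rs; apply in_map; auto|].
    apply INP in hin. destruct (SP c1 a b hin) as [p1 [p2 [p3 _]]].
    simpl. split; split.
    + apply Rle_trans with (X l (c - 1)); [apply (Xle (Xs l) XS XN); unfold K0, K in *; lia| lra].
    + apply Rle_trans with (X l c); [lra| apply (Xle (Xs l) XS XN); unfold K0, K in *; lia].
    + apply Rle_trans with (Y l (j - 1)); [apply (Xle (Ys l) YS YN); unfold M0, Mm in *; lia| lra].
    + apply Rle_trans with (Y l j); [lra| apply (Xle (Ys l) YS YN); unfold M0, Mm in *; lia].
  - intros [r [hr hq]]. destruct (rs_in r hr) as [c [a [b [-> hs]]]].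
    destruct (SP c a b hs) as [p1 [p2 [p3 [p4 _]]]]. simpl in hq. destruct hq as [hx hy].
    destruct (loc_cc (Xs l) XS XN c (cE F K0 c a b) (fst q) ltac:(lia) ltac:(unfold K0, K in *; lia) hx) as [k [hk hkx]].
    assert (hy' : XX (Ys l) (S a - 1) <= snd q <= XX (Ys l) b) by (replace (S a - 1)%nat with a by lia; exact hy).
    destruct (loc_cc (Ys l) YS YN (S a) b (snd q) ltac:(lia) ltac:(unfold M0, Mm in *; lia) hy') as [j [hj hjy]].
    pose proof (p4 k hk) as hr'. unfold runb in hr'. apply runF_spec in hr'. destruct hr' as [_ [hr' _]].
    apply (IN P Mb Hbd Hmod l Hl HPne k j q).
    + unfold K0, K in *; lia.
    + unfold M0, Mm in *; lia.
    + right; left. split; [unfold K0, K in *; lia| exact hkx].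
    + right; left. split; [unfold M0, Mm in *; lia| exact hjy].
    + apply hr'; lia.
Qed.

Lemma disj_rs : forall i j, (i < length rs)%nat -> (j < length rs)%nat -> i <> j ->
  forall q, ~ (in_rect_open (nth i rs (0,0,0,0)) q /\ in_rect_open (nth j rs (0,0,0,0)) q).
Proof.
  intros i j hi hj hij q [h1 h2].
  unfold rs in *. rewrite length_map in hi, hj.
  rewrite (nth_indep _ _ (rect_of (0,0,0)%nat)) in h1 by (rewrite length_map; auto).
  rewrite (nth_indep _ _ (rect_of (0,0,0)%nat)) in h2 by (rewrite length_map; auto).
  rewrite map_nth in h1, h2.
  pose proof (nth_In pcs (0,0,0)%nat hi) as hin1. pose proof (nth_In pcs (0,0,0)%nat hj) as hin2.
  assert (hnd := NoDup_pieces F K0 M0 hF0c hFc0 hFK hFM hND1 hND2 hFne).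
  destruct (nth i pcs (0,0,0)%nat) as [[c a] b] eqn:E1.
  destruct (nth j pcs (0,0,0)%nat) as [[c' a'] b'] eqn:E2.
  pose proof hin1 as hs1; pose proof hin2 as hs2. apply INP in hs1, hs2.
  destruct (SP c a b hs1) as [p1 [p2 [p3 _]]]. destruct (SP c' a' b' hs2) as [q1 [q2 [q3 _]]].
  simpl in h1, h2. destruct h1 as [hx1 hy1]. destruct h2 as [hx2 hy2].
  destruct (loc_co (Xs l) XN c (cE F K0 c a b) (fst q) ltac:(lia) ltac:(unfold K0, K in *; lia) ltac:(unfold X in *; lra)) as [k [hk hkx]].
  destruct (loc_co (Xs l) XN c' (cE F K0 c' a' b') (fst q) ltac:(lia) ltac:(unfold K0, K in *; lia) ltac:(unfold X in *; lra)) as [k' [hk' hkx']].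
  assert (k = k') by (apply (loc_unique (Xs l) XS XN k k' (fst q)); auto; unfold K0, K in *; lia). subst k'.
  assert (ey1 : XX (Ys l) (S a - 1) <= snd q < XX (Ys l) b) by (replace (S a - 1)%nat with a by lia; unfold Y in *; lra).
  assert (ey2 : XX (Ys l) (S a' - 1) <= snd q < XX (Ys l) b') by (replace (S a' - 1)%nat with a' by lia; unfold Y in *; lra).
  destruct (loc_co (Ys l) YN (S a) b (snd q) ltac:(lia) ltac:(unfold M0, Mm in *; lia) ey1) as [r [hr hry]].
  destruct (loc_co (Ys l) YN (S a') b' (snd q) ltac:(lia) ltac:(unfold M0, Mm in *; lia) ey2) as [r' [hr' hry']].
  assert (r = r') by (apply (loc_unique (Ys l) YS YN r r' (snd q)); auto; unfold M0, Mm in *; lia). subst r'.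
  pose proof (piece_unique F K0 M0 hF0c hFc0 hFK hFM hND1 hND2 hFne c a b c' a' b' k r hin1 hin2 hk hk' ltac:(lia) ltac:(lia)) as e.
  rewrite <- E1, <- E2 in e. apply hij. eapply NoDup_nth; eauto.
Qed.

Lemma bd_rs : forall r, In r rs ->
  let '(a, b, c, d) := r in forall x, a <= x <= b -> boundary_pt P (x, c) /\ boundary_pt P (x, d).
Proof.
  intros r hr. destruct (rs_in r hr) as [c [a [b [-> hs]]]].
  destruct (SP c a b hs) as [p1 [p2 [p3 [p4 _]]]]. simpl. intros x hx.
  destruct (loc_cc (Xs l) XS XN c (cE F K0 c a b) x ltac:(lia) ltac:(unfold K0, K in *; lia) hx) as [k [hk hkx]].
  pose proof (p4 k hk) as hr'. unfold runb in hr'. apply runF_spec in hr'. destruct hr' as [hab [hin [ha hb]]].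
  assert (hcx : cx (Xs l) k x) by (right; left; split; [unfold K0, K in *; lia| exact hkx]).
  assert (Yab : Y l a <= Y l b) by (apply (Xle (Ys l) YS YN); unfold M0, Mm in *; lia).
  assert (rk : (k <= S (K l))%nat) by (unfold K0 in *; lia).
  split; split.
  - apply (IN P Mb Hbd Hmod l Hl HPne k (S a) (x, Y l a) rk ltac:(unfold M0, Mm in *; lia) hcx).
    + right; left. split; [unfold M0, Mm in *; lia|]. cbn [fst snd]. replace (S a - 1)%nat with a by lia.
      split; [unfold Y; lra|]. apply (Xle (Ys l) YS YN); unfold M0, Mm in *; lia.
    + apply hin; lia.
  - apply (NI P Mb Hbd Hmod l Hl HPne k a (x, Y l a) rk ltac:(unfold M0, Mm in *; lia) hcx); [|exact ha].
    cbn [fst snd]. destruct (Nat.eq_dec a 0) as [->|h0].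
    + left; split; auto. unfold Y; lra.
    + right; left. split; [unfold M0, Mm in *; lia|]. split; [|unfold Y; lra].
      apply (Xle (Ys l) YS YN); unfold M0, Mm in *; lia.
  - apply (IN P Mb Hbd Hmod l Hl HPne k b (x, Y l b) rk ltac:(unfold M0, Mm in *; lia) hcx).
    + right; left. split; [unfold M0, Mm in *; lia|]. cbn [fst snd]. split; [|unfold Y; lra].
      apply (Xle (Ys l) YS YN); unfold M0, Mm in *; lia.
    + apply hin; lia.
  - apply (NI P Mb Hbd Hmod l Hl HPne k (S b) (x, Y l b) rk ltac:(unfold M0, Mm in *; lia) hcx); [|exact hb].
    cbn [fst snd]. destruct (Nat.eq_dec b (KK (Ys l))) as [e|h0].
    + right; right. split; [rewrite e; auto|]. rewrite <- e. unfold Y; lra.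
    + right; left. split; [unfold M0, Mm in *; lia|]. replace (S b - 1)%nat with b by lia. split; [unfold Y; lra|].
      apply (Xle (Ys l) YS YN); unfold M0, Mm in *; lia.
Qed.

Lemma X_int i : (i <= K0)%nat -> polyomino P -> exists z, X l i = IZR z.
Proof.
  intros hi hp. assert (h : In (X l i) (Xs l)) by (apply (Xin (Xs l) XN); exists i; split; auto).
  unfold Xs in h. apply srt_In, in_map_iff in h. destruct h as [p [e hpl]].
  apply Hl in hpl. destruct (poly_corner P p hp hpl) as [[z hz] _]. exists z; congruence.
Qed.
Lemma Y_int i : (i <= M0)%nat -> polyomino P -> exists z, Y l i = IZR z.
Proof.
  intros hi hp. assert (h : In (Y l i) (Ys l)) by (apply (Xin (Ys l) YN); exists i; split; auto).
  unfold Ys in h. apply srt_In, in_map_iff in h. destruct h as [p [e hpl]].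
  apply Hl in hpl. destruct (poly_corner P p hp hpl) as [_ [z hz]]. exists z; congruence.
Qed.

Lemma poly_rs : polyomino P -> forall r, In r rs -> polyomino (in_rect r).
Proof.
  intros hp r hr. pose proof (wf_rs r hr) as hw.
  destruct (rs_in r hr) as [c [a [b [-> hs]]]].
  destruct (SP c a b hs) as [p1 [p2 [p3 _]]]. simpl in hw |- *.
  destruct (X_int (c - 1) ltac:(lia) hp) as [z1 e1].
  destruct (X_int (cE F K0 c a b) ltac:(lia) hp) as [z2 e2].
  destruct (Y_int a ltac:(lia) hp) as [z3 e3].
  destruct (Y_int b ltac:(lia) hp) as [z4 e4].
  rewrite e1, e2, e3, e4 in *. destruct hw as [w1 w2]. apply lt_IZR in w1, w2.
  apply rect_poly; auto.
Qed.

End Final.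

Theorem corollary1 (P : point -> Prop) (n : nat) :
  orthogonal_polygon P -> num_corners P n ->
  exists rs : list rect,
    vertical_rect_partition P rs /\
    INR (length rs) <= 3 / 4 * INR n - 2 /\
    (polyomino P -> forall r, In r rs -> polyomino (in_rect r)).
Proof.
  intros [[q0 Hq0] [[Mb Hbd] [Hm3 _]]] [l [Hnd [Hl Hlen]]].
  assert (Hmod : forall p, exists m, locally_like P p (mdl m)).
  { intro p. destruct (Hm3 p) as [h|[h|[[s h]|[[s h]|[[s [t h]]|[s [t h]]]]]]].
    - exists Mfull; exact h.
    - exists Mempty; exact h.
    - exists (Mhx s); exact h.
    - exists (Mhy s); exact h.
    - exists (Mqd s t); exact h.
    - exists (Mtq s t); exact h. }
  assert (HPne : exists q, P q) by eauto.
  exists (rs P l). split; [|split].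
  - split; [apply (wf_rs P Mb Hbd Hmod l Hl HPne Hnd)|].
    split; [apply (cover_rs P Mb Hbd Hmod l Hl HPne Hnd)|].
    split; [apply (disj_rs P Mb Hbd Hmod l Hl HPne Hnd)|].
    apply (bd_rs P Mb Hbd Hmod l Hl HPne Hnd).
  - pose proof (count_final P Mb Hbd Hmod l Hl HPne Hnd) as h. rewrite Hlen in h.
    apply le_INR in h. rewrite plus_INR, !mult_INR in h.
    assert (INR 4 = 4) by (simpl; lra). assert (INR 8 = 8) by (simpl; lra). assert (INR 3 = 3) by (simpl; lra).
    rewrite H, H0, H1 in h. lra.
  - apply (poly_rs P Mb Hbd Hmod l Hl HPne Hnd).
Qed.
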